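(* The code $\mathcal{C}_0=\{3456,123,145,256,45,56,1,2,3,\emptyset\}\subseteq 2^{[6]}$ (where e.g. $3456$ denotes $\{3,4,5,6\}$) is minimally non-convex and has no local obstructions of the first or second kind.
   Context: A code is a subset $\mathcal{C}\subseteq 2^{[n]}$. For $\sigma\subseteq[n]$, $\mathrm{Tk}_{\mathcal{C}}(\sigma)=\{c\in\mathcal{C}\mid\sigma\subseteq c\}$; a trunk in $\mathcal{C}$ is a subset that is empty or of this form. A morphism $f:\mathcal{C}\to\mathcal{D}$ is a function such that preimages of trunks in $\mathcal{D}$ are trunks in $\mathcal{C}$; an isomorphism is a morphism whose inverse function is a morphism. Given $U_1,\dots,U_n\subseteq X$, $\mathrm{code}(\mathcal{U},X)=\{\sigma\subseteq[n]\mid \bigcap_{i\in\sigma}U_i\setminus\bigcup_{j\notin\sigma}U_j\neq\emptyset\}$, the empty intersection being $X$. A code is convex if it equals $\mathrm{code}(\mathcal{U},X)$ for some open convex $X\subseteq\mathbb{R}^d$ and convex open $U_i\subseteq X$. A code $\mathcal{C}$ is minimally non-convex if it is not convex, every trunk properly contained in $\mathcal{C}$ is convex, and every image $f(\mathcal{C})$ under a morphism that is not isomorphic to $\mathcal{C}$ is convex. $\Delta(\mathcal{C})$ denotes the simplicial complex consisting of all subsets of codewords of $\mathcal{C}$. $\mathcal{C}$ has a local obstruction (of the first kind) at $\sigma\in\Delta(\mathcal{C})\setminus\mathcal{C}$ if $\mathrm{link}_{\Delta(\mathcal{C})}(\sigma)$ is not contractible, and a local obstruction of the second kind at $\sigma\in\Delta(\mathcal{C})\setminus\mathcal{C}$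 if $\mathrm{link}_{\Delta(\mathcal{C})}(\sigma)$ is not collapsible. *)

(* Defs.v *)
From mathcomp Require Import all_boot.
From Stdlib Require Import Reals Relations.

Set Implicit Arguments.
Unset Strict Implicit.
Unset Printing Implicit Defensive.

(* A code on [n] is a set of subsets of 'I_n (element i+1 of [n] is ordinal i). *)
Definition code (n : nat) := {set {set 'I_n}}.

Definition Tk (n : nat) (C : code n) (s : {set 'I_n}) : code n :=
  [set c in C | s \subset c].

Definition is_trunk (n : nat) (C : code n) (T : code n) : Prop :=
  T = set0 \/ exists s : {set 'I_n}, T = Tk C s.

(* f : C -> D morphism (values of f outside C are irrelevant) *)
Definition code_morphism (n m : nat) (C : code n) (D : code m)
  (f : {set 'I_n} -> {set 'I_m}) : Prop :=
  (forall c, c \in C -> f c \in D) /\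
  (forall T : code m, is_trunk D T -> is_trunk C [set c in C | f c \in T]).

Definition codes_isomorphic (n m : nat) (C : code n) (D : code m) : Prop :=
  exists (f : {set 'I_n} -> {set 'I_m}) (g : {set 'I_m} -> {set 'I_n}),
    [/\ code_morphism C D f, code_morphism D C g,
        (forall c, c \in C -> g (f c) = c) &
        (forall d, d \in D -> f (g d) = d)].

Definition Rvec (d : nat) := 'I_d -> R.

Definition open_set (d : nat) (X : Rvec d -> Prop) : Prop :=
  forall x, X x -> exists eps, (0 < eps)%R /\
    forall y : Rvec d, (forall i, (Rabs (y i - x i) < eps)%R) -> X y.

Definition convex_set (d : nat) (X : Rvec d -> Prop) : Prop :=
  forall x y t, X x -> X y -> (0 <= t <= 1)%R ->
    X (fun i => t * x i + (1 - t) * y i)%R.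

Definition realizes (n d : nat) (C : code n) (U : 'I_n -> Rvec d -> Prop)
  (X : Rvec d -> Prop) : Prop :=
  forall s : {set 'I_n},
    s \in C <-> exists p, X p /\ (forall i, U i p <-> i \in s).

Definition convex_code (n : nat) (C : code n) : Prop :=
  exists (d : nat) (X : Rvec d -> Prop) (U : 'I_n -> Rvec d -> Prop),
    [/\ open_set X, convex_set X,
        (forall i, open_set (U i) /\ convex_set (U i) /\ (forall p, U i p -> X p)) &
        realizes C U X].

Definition minimally_non_convex (n : nat) (C : code n) : Prop :=
  [/\ ~ convex_code C,
      (forall T : code n, is_trunk C T -> T \proper C -> convex_code T) &
      (forall (m : nat) (D : code m) (f : {set 'I_n} -> {set 'I_m}),
          code_morphism C D f ->
          ~ codes_isomorphic C [set f c | c in C] ->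
          convex_code [set f c | c in C])].

Definition Delta (n : nat) (C : code n) : {set {set 'I_n}} :=
  [set t : {set 'I_n} | [exists c in C, t \subset c]].

Definition link (n : nat) (K : {set {set 'I_n}}) (s : {set 'I_n}) : {set {set 'I_n}} :=
  [set t in K | [disjoint t & s] && (t :|: s \in K)].

Definition realization (n : nat) (K : {set {set 'I_n}}) (x : Rvec n) : Prop :=
  (forall i, (0 <= x i)%R) /\ \big[Rplus/0%R]_(i < n) x i = 1%R /\
  exists t, t \in K /\ (forall i, i \notin t -> x i = 0%R).

Definition contractible_set (n : nat) (X : Rvec n -> Prop) : Prop :=
  exists (x0 : Rvec n) (H : R -> Rvec n -> Rvec n),
    [/\ X x0,
        (forall t x, (0 <= t <= 1)%R -> X x -> X (H t x)),
        (forall x, X x -> H 0%R x = x),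
        (forall x, X x -> H 1%R x = x0) &
        (forall t x, (0 <= t <= 1)%R -> X x -> forall eps, (0 < eps)%R ->
          exists delta, (0 < delta)%R /\
            forall s y, (0 <= s <= 1)%R -> X y -> (Rabs (s - t) < delta)%R ->
              (forall i, (Rabs (y i - x i) < delta)%R) ->
              forall i, (Rabs (H s y i - H t x i) < eps)%R)].

Definition contractible (n : nat) (K : {set {set 'I_n}}) : Prop :=
  contractible_set (realization K).

Definition elem_collapse (n : nat) (K K' : {set {set 'I_n}}) : Prop :=
  exists t s : {set 'I_n},
    [/\ s \in K, t \proper s, #|s| = #|t|.+1,
        (forall g, g \in K -> t \subset g -> g = t \/ g = s) &
        K' = K :\ t :\ s].

Definition collapsible (n : nat) (K : {set {set 'I_n}}) : Prop :=
  exists v : 'I_n, clos_refl_trans _ (@elem_collapse n) K [set set0; [set v]].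

Definition local_obstruction1 (n : nat) (C : code n) (s : {set 'I_n}) : Prop :=
  s \in Delta C /\ s \notin C /\ ~ contractible (link (Delta C) s).

Definition local_obstruction2 (n : nat) (C : code n) (s : {set 'I_n}) : Prop :=
  s \in Delta C /\ s \notin C /\ ~ collapsible (link (Delta C) s).

(* cw l = the codeword of [6] whose elements (numbered 1..6) are listed in l *)
Definition cw (l : seq nat) : {set 'I_6} := [set i : 'I_6 | (nat_of_ord i).+1 \in l].

Definition C0 : code 6 :=
  [set cw [:: 3; 4; 5; 6]; cw [:: 1; 2; 3]; cw [:: 1; 4; 5]; cw [:: 2; 5; 6];
       cw [:: 4; 5]; cw [:: 5; 6]; cw [:: 1]; cw [:: 2]; cw [:: 3]; cw [::]].

(* Main.v *)
From HB Require Import structures.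
Require Import Defs.
From mathcomp Require Import all_boot.
From Stdlib Require Import Reals Relations Lra FunctionalExtensionality Classical ClassicalEpsilon.

Set Implicit Arguments.
Unset Strict Implicit.
Unset Printing Implicit Defensive.


Definition o0 : 'I_6 := @Ordinal 6 0 isT.
Definition o1 : 'I_6 := @Ordinal 6 1 isT.
Definition o2 : 'I_6 := @Ordinal 6 2 isT.
Definition o3 : 'I_6 := @Ordinal 6 3 isT.
Definition o4 : 'I_6 := @Ordinal 6 4 isT.
Definition o5 : 'I_6 := @Ordinal 6 5 isT.
Definition ords : seq 'I_6 := [:: o0; o1; o2; o3; o4; o5].

Lemma ord6_cases (i : 'I_6) :
  i = o0 \/ i = o1 \/ i = o2 \/ i = o3 \/ i = o4 \/ i = o5.
Proof.
case: i => [[|[|[|[|[|[|m]]]]]] Hm].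
- by left; apply/val_inj.
- by right; left; apply/val_inj.
- by do 2 right; left; apply/val_inj.
- by do 3 right; left; apply/val_inj.
- by do 4 right; left; apply/val_inj.
- by do 5 right; apply/val_inj.
- by [].
Qed.

Lemma ordsP (i : 'I_6) : i \in ords.
Proof. by case: (ord6_cases i) => [->|[->|[->|[->|[->|->]]]]]. Qed.

Definition bits (s : {set 'I_6}) : seq bool := [seq i \in s | i <- ords].
Definition dec (bs : seq bool) : {set 'I_6} := [set i : 'I_6 | nth false bs i].

Lemma in_bits (s : {set 'I_6}) i : (i \in s) = nth false (bits s) i.
Proof. by case: (ord6_cases i) => [->|[->|[->|[->|[->|->]]]]]. Qed.

Lemma bits_inj : injective bits.
Proof.
move=> s t H; apply/setP => i; by rewrite !in_bits H.
Qed.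

Lemma eq_bits (s t : {set 'I_6}) : (s == t) = (bits s == bits t).
Proof.
apply/eqP/eqP => [->//|]; exact: bits_inj.
Qed.

Definition sz6 (bs : seq bool) := size bs == 6.

Lemma bits_dec bs : sz6 bs -> bits (dec bs) = bs.
Proof.
case: bs => [|b0 [|b1 [|b2 [|b3 [|b4 [|b5 [|]]]]]]] //= _.
by rewrite /bits /= !inE.
Qed.

Lemma sz6_bits s : sz6 (bits s). Proof. by []. Qed.

Fixpoint allbv (n : nat) : seq (seq bool) :=
  if n is n'.+1 then [seq b :: l | b <- [:: false; true], l <- allbv n'] else [:: [::]].

Lemma allbvP (l : seq bool) : l \in allbv (size l).
Proof.
elim: l => [|b l IH] //=.
rewrite !mem_cat; apply/orP; case: b; [right|left].
- by rewrite ?cats0 ?mem_cat ?orbF; apply: map_f.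
- by apply: map_f.
Qed.

Lemma bits_all s : bits s \in allbv 6.
Proof. by rewrite -(eqP (sz6_bits s)); exact: allbvP. Qed.

Lemma forall_bits (P : {set 'I_6} -> Prop) (Q : seq bool -> bool) :
  (forall s, Q (bits s) -> P s) -> all Q (allbv 6) -> forall s, P s.
Proof. by move=> H /allP A s; apply: H; apply: A; exact: bits_all. Qed.

Definition subm (u v : seq bool) := all2 (fun a b => a ==> b) u v.

Lemma subsetbE (s t : {set 'I_6}) : (s \subset t) = subm (bits s) (bits t).
Proof.
have -> : subm (bits s) (bits t) = all (fun i => (i \in s) ==> (i \in t)) ords by [].
apply/subsetP/allP => [H i _|H i Hi]; first by apply/implyP; apply: H.
by move: (H i (ordsP i)) => /implyP; apply.
Qed.

Definition orm (u v : seq bool) := [seq x.1 || x.2 | x <- zip u v].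
Definition andm (u v : seq bool) := [seq x.1 && x.2 | x <- zip u v].

Lemma bitsU (s t : {set 'I_6}) : bits (s :|: t) = orm (bits s) (bits t).
Proof. by rewrite /bits /orm /= !inE. Qed.
Lemma bitsI (s t : {set 'I_6}) : bits (s :&: t) = andm (bits s) (bits t).
Proof. by rewrite /bits /andm /= !inE. Qed.
Lemma bits0 : bits set0 = nseq 6 false.
Proof. by rewrite /bits /= !inE. Qed.
Lemma bits1 (i : 'I_6) : bits [set i] = [seq j == i | j <- ords].
Proof. by rewrite /bits /= !inE. Qed.

Lemma disjointbE (s t : {set 'I_6}) : [disjoint s & t] = (andm (bits s) (bits t) == nseq 6 false).
Proof. by rewrite -setI_eq0 eq_bits bitsI bits0. Qed.

Definition C0L : seq (seq nat) :=
  [:: [:: 3; 4; 5; 6]; [:: 1; 2; 3]; [:: 1; 4; 5]; [:: 2; 5; 6];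
       [:: 4; 5]; [:: 5; 6]; [:: 1]; [:: 2]; [:: 3]; [::]].
Definition C0list : seq {set 'I_6} := map cw C0L.

Lemma C0E (c : {set 'I_6}) : (c \in C0) = (c \in C0list).
Proof. by rewrite /C0 !inE !orbA. Qed.

Definition cwm (l : seq nat) : seq bool := [seq (nat_of_ord i).+1 \in l | i <- ords].
Lemma bits_cw l : bits (cw l) = cwm l.
Proof. by rewrite /bits /cwm /= !inE. Qed.

Definition C0m : seq (seq bool) := map cwm C0L.

Lemma C0mE (c : {set 'I_6}) : (c \in C0) = (bits c \in C0m).
Proof.
rewrite C0E /C0list /C0m; apply/mapP/mapP => [[l Hl ->]|[l Hl E]].
- by exists l => //; rewrite bits_cw.
- by exists l => //; apply: bits_inj; rewrite bits_cw.
Qed.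

Lemma C0_prop (P : seq bool -> bool) : all P C0m -> forall c, c \in C0 -> P (bits c).
Proof. by move=> /allP H c; rewrite C0mE => /H. Qed.

Definition Deltam (g : seq bool) := has (subm g) C0m.
Lemma DeltaE (g : {set 'I_6}) : (g \in Defs.Delta C0) = Deltam (bits g).
Proof.
rewrite /Defs.Delta inE /Deltam; apply/existsP/hasP => [[c /andP [Hc Hs]]|[cm Hcm Hs]].
- by exists (bits c); [rewrite -C0mE|rewrite -subsetbE].
- move: Hcm; rewrite /C0m => /mapP [l Hl Ecm].
  exists (cw l); apply/andP; split.
  + by rewrite C0E; apply: map_f.
  + by rewrite subsetbE bits_cw -Ecm.
Qed.


Definition linkm (s g : seq bool) :=
  [&& Deltam g, andm g s == nseq 6 false & Deltam (orm g s)].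

Lemma linkE (s g : {set 'I_6}) :
  (g \in link (Defs.Delta C0) s) = linkm (bits s) (bits g).
Proof. by rewrite /link inE DeltaE disjointbE DeltaE bitsU. Qed.

Definition clr (s : seq bool) (i : nat) := set_nth false s i false.

Fixpoint checkp (Km : seq bool -> bool) (steps : seq (seq bool * nat)) (v : seq bool) : bool :=
  match steps with
  | [::] => all (fun g => Km g == ((g == nseq 6 false) || (g == v))) (allbv 6)
  | (s, i) :: l =>
    [&& (i < 6), sz6 s, nth false s i, Km s,
        all (fun g => Km g ==> subm (clr s i) g ==> (g == clr s i) || (g == s)) (allbv 6) &
        checkp (fun g => [&& Km g, g != clr s i & g != s]) l v]
  end.

Lemma bitsD1 (A : {set 'I_6}) (x : 'I_6) : bits (A :\ x) = clr (bits A) x.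
Proof.
by case: (ord6_cases x) => [->|[->|[->|[->|[->|->]]]]]; rewrite /bits /clr /= !inE.
Qed.

Lemma checkp_sound (steps : seq (seq bool * nat)) (v : 'I_6) :
  forall (K : {set {set 'I_6}}) Km, (forall g, (g \in K) = Km (bits g)) ->
  checkp Km steps (bits [set v]) ->
  clos_refl_trans _ (@elem_collapse 6) K [set set0; [set v]].
Proof.
elim: steps => [|[s i] l IH] K Km HK.
- move=> /allP H.
  have -> : K = [set set0; [set v]].
    apply/setP => g; rewrite HK !inE (eqP (H _ (bits_all g))).
    by rewrite !eq_bits bits0.
  exact: rt_refl.
- case/and5P => Hi Hs Hn HKs /andP [Hfree Hrest].
  set S := dec s; set x := Ordinal Hi; set T := S :\ x.
  have bS : bits S = s by rewrite bits_dec.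
  have bT : bits T = clr s i by rewrite /T bitsD1 bS.
  have xS : x \in S by rewrite /S inE.
  apply: (@rt_trans _ _ _ (K :\ T :\ S)).
  + apply: rt_step; exists T, S; split.
    * by rewrite HK bS.
    * exact: properD1.
    * by rewrite (cardsD1 x S) xS.
    * move=> g Hg HTg; move/allP: Hfree => Hf; have := Hf _ (bits_all g).
      have -> : Km (bits g) by rewrite -HK.
      have HT' : T \subset g by exact: HTg.
      have -> : subm (clr s i) (bits g) by rewrite subsetbE bT in HT'.
      rewrite /= -bT -bS -!eq_bits.
      by case/orP => /eqP ->; [left|right].
    * by [].
  + apply: (IH _ (fun g => [&& Km g, g != clr s i & g != s])) => //.
    move=> g; rewrite !inE HK -bT -bS -!eq_bits.
    by case: (g == S); case: (g == T); case: (Km (bits g)).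
Qed.

Definition singm (vi : nat) := [seq (k == vi) | k <- iota 0 6].

Definition validb (Kl : seq (seq bool)) (s : seq bool) (i : nat) :=
  nth false s i && all (fun g => subm (clr s i) g ==> (g == clr s i) || (g == s)) Kl.

Fixpoint greedy (fuel : nat) (Kl : seq (seq bool)) : seq (seq bool * nat) :=
  if fuel is f.+1 then
    if size Kl <= 2 then [::] else
    match [seq p <- [seq (s, i) | s <- Kl, i <- iota 0 6] | validb Kl p.1 p.2] with
    | (s, i) :: _ => (s, i) :: greedy f [seq g <- Kl | (g != clr s i) && (g != s)]
    | [::] => [::]
    end
  else [::].

Definition collapse_ok (sm : seq bool) :=
  let Km := linkm sm in
  let st := greedy 20 [seq g <- allbv 6 | Km g] in
  has (fun vi => checkp Km st (singm vi)) (iota 0 6).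

Lemma all_collapse :
  all (fun sm => (Deltam sm && (sm \notin C0m)) ==> collapse_ok sm) (allbv 6).
Proof. vm_compute. reflexivity. Qed.

Definition coneb (Km : seq bool -> bool) (vi : nat) :=
  Km (singm vi) && all (fun g => Km g ==> Km (orm g (singm vi))) (allbv 6).

Lemma all_cone :
  all (fun sm => (Deltam sm && (sm \notin C0m)) ==> (sm == singm 4) || has (coneb (linkm sm)) (iota 0 6)) (allbv 6).
Proof. vm_compute. reflexivity. Qed.

Lemma bits_single vi (H : vi < 6) : bits [set Ordinal H] = singm vi.
Proof.
by case: vi H => [|[|[|[|[|[|vi]]]]]] H //; rewrite bits1.
Qed.

Lemma no_obstruction2 (s : {set 'I_6}) : ~ local_obstruction2 C0 s.
Proof.
case=> HD [HC Hn]; apply: Hn.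
have H1 := allP all_collapse _ (bits_all s).
have H2 : Deltam (bits s) && (bits s \notin C0m) by rewrite -DeltaE HD -C0mE HC.
have {H1 H2} := implyP H1 H2.
rewrite /collapse_ok.
case/hasP => vi; rewrite mem_iota => /andP [_ Hvi] Hch.
exists (Ordinal Hvi).
apply: (checkp_sound (steps := greedy 20 [seq g <- allbv 6 | linkm (bits s) g])
          (Km := linkm (bits s))); first by move=> g; rewrite linkE.
rewrite bits_single; exact: Hch.
Qed.


Open Scope R_scope.

Lemma Rplus_assoc' : associative Rplus.
Proof. by move=> x y z; rewrite Rplus_assoc. Qed.
HB.instance Definition _ := Monoid.isComLaw.Build R 0 Rplus Rplus_assoc' Rplus_comm Rplus_0_l.

Lemma sum_ge0 n (P : pred 'I_n) (F : 'I_n -> R) :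
  (forall i, 0 <= F i) -> 0 <= \big[Rplus/0]_(i < n | P i) F i.
Proof.
move=> H; apply: (big_ind (fun r => 0 <= r)) => //; [lra| move=> x y; lra].
Qed.

Lemma sum_lin n (a b : R) (F G : 'I_n -> R) :
  \big[Rplus/0]_(i < n) (a * F i + b * G i) =
  a * \big[Rplus/0]_(i < n) F i + b * \big[Rplus/0]_(i < n) G i.
Proof.
elim: n F G => [|n IH] F G; first by rewrite !big_ord0 Rmult_0_r Rmult_0_r Rplus_0_r.
rewrite !big_ord_recr /= IH. set u := bigop.body _ _ _. set v := bigop.body _ _ _. set w := F _. set w2 := G _. ring.
Qed.

Lemma sum_ext n (F G : 'I_n -> R) : (forall i, F i = G i) ->
  \big[Rplus/0]_(i < n) F i = \big[Rplus/0]_(i < n) G i.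
Proof. by move=> H; apply: eq_bigr => i _. Qed.

Definition ev (v : 'I_6) : Rvec 6 := fun i => if i == v then 1 else 0.

Lemma sum_ev v : \big[Rplus/0]_(i < 6) ev v i = 1.
Proof.
rewrite (bigD1 v) //= /ev eqxx big1 ?Rplus_0_r // => i /negbTE ->; done.
Qed.

Lemma real_le1 (K : {set {set 'I_6}}) x i : realization K x -> 0 <= x i <= 1.
Proof.
case=> H0 [Hs _]; split; first exact: H0.
rewrite -Hs (bigD1 i) //=.
rewrite -{1}(Rplus_0_r (x i)); apply: Rplus_le_compat_l; exact: sum_ge0.
Qed.

Definition sumd (x y : Rvec 6) :=
  Rabs (y o0 - x o0) + Rabs (y o1 - x o1) + Rabs (y o2 - x o2) +
  Rabs (y o3 - x o3) + Rabs (y o4 - x o4) + Rabs (y o5 - x o5).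

Lemma sumd_le x y i : Rabs (y i - x i) <= sumd x y.
Proof.
rewrite /sumd.
have h0 := Rabs_pos (y o0 - x o0); have h1 := Rabs_pos (y o1 - x o1);
have h2 := Rabs_pos (y o2 - x o2); have h3 := Rabs_pos (y o3 - x o3);
have h4 := Rabs_pos (y o4 - x o4); have h5 := Rabs_pos (y o5 - x o5).
case: (ord6_cases i) => [->|[->|[->|[->|[->|->]]]]]; lra.
Qed.

Lemma sumd_small x y d : (forall i, Rabs (y i - x i) < d) -> sumd x y < 6 * d.
Proof.
move=> H; rewrite /sumd.
have := H o0; have := H o1; have := H o2; have := H o3; have := H o4; have := H o5.
lra.
Qed.

Lemma cont_of_bound (X : Rvec 6 -> Prop) (H : R -> Rvec 6 -> Rvec 6) (K : R) :
  0 <= K ->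
  (forall s t x y i, 0 <= s <= 1 -> 0 <= t <= 1 -> X x -> X y ->
     Rabs (H s y i - H t x i) <= K * (Rabs (s - t) + sumd x y)) ->
  forall t x, (0 <= t <= 1) -> X x -> forall eps, 0 < eps ->
          exists delta, 0 < delta /\
            forall s y, (0 <= s <= 1) -> X y -> Rabs (s - t) < delta ->
              (forall i, Rabs (y i - x i) < delta) ->
              forall i, Rabs (H s y i - H t x i) < eps.
Proof.
move=> HK Hb t x Ht Hx eps Heps.
exists (eps / (7 * K + 1)); split.
  apply: Rdiv_lt_0_compat; lra.
move=> s y Hs Hy Hst Hyx i.
have Hsd := sumd_small Hyx.
apply: (Rle_lt_trans _ _ _ (Hb s t x y i Hs Ht Hx Hy)).
set d := eps / (7 * K + 1) in Hst Hsd *.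
have Hd : d * (7 * K + 1) = eps by rewrite /d; field; lra.
have Hsum : Rabs (s - t) + sumd x y <= 7 * d by lra.
have : K * (Rabs (s - t) + sumd x y) <= K * (7 * d) by apply: Rmult_le_compat_l.
have : 0 < d by rewrite /d; apply: Rdiv_lt_0_compat; lra.
nra.
Qed.

Lemma abs_bounds a b : Rabs a <= b -> - b <= a <= b.
Proof. unfold Rabs; destruct (Rcase_abs a); lra. Qed.

Lemma abs_ge a : a <= Rabs a /\ - a <= Rabs a.
Proof. unfold Rabs; destruct (Rcase_abs a); lra. Qed.

Lemma cone_bound s t X Y e S :
  0 <= s <= 1 -> 0 <= t <= 1 -> 0 <= X <= 1 -> 0 <= e <= 1 -> Rabs (Y - X) <= S ->
  Rabs (((1 - s) * Y + s * e) - ((1 - t) * X + t * e)) <= 2 * (Rabs (s - t) + S).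
Proof.
move=> Hs Ht HX He /abs_bounds HA.
have [D1 D2] := abs_ge (s - t).
apply: Rabs_le.
have E : ((1 - s) * Y + s * e) - ((1 - t) * X + t * e) =
         (1 - s) * (Y - X) + (t - s) * X + (s - t) * e by ring.
rewrite E; split; nra.
Qed.

Definition cone_H (v : 'I_6) (t : R) (x : Rvec 6) : Rvec 6 :=
  fun i => (1 - t) * x i + t * ev v i.

Lemma ev_bounds v i : 0 <= ev v i <= 1.
Proof. rewrite /ev; case: (i == v); lra. Qed.

Lemma cone_contractible (K : {set {set 'I_6}}) (v : 'I_6) :
  [set v] \in K -> (forall t, t \in K -> t :|: [set v] \in K) -> contractible K.
Proof.
move=> Hv Hc.
exists (ev v), (cone_H v); split.
- split; first by move=> i; have := ev_bounds v i; lra.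
  split; first exact: sum_ev.
  exists [set v]; split => // i; rewrite inE /ev => /negbTE -> //.
- move=> t x Ht [H0 [Hs [t0 [Ht0 Hz]]]].
  split; first by move=> i; rewrite /cone_H; have := ev_bounds v i; have := H0 i; nra.
  split.
  + rewrite /cone_H sum_lin Hs sum_ev; ring.
  + exists (t0 :|: [set v]); split; first exact: Hc.
    move=> i; rewrite !inE negb_or => /andP [Hi Hiv].
    by rewrite /cone_H Hz // /ev (negbTE Hiv); ring.
- move=> x _; apply: functional_extensionality => i; rewrite /cone_H; ring.
- move=> x _; apply: functional_extensionality => i; rewrite /cone_H; ring.
- apply: (@cont_of_bound _ _ 2); first lra.
  move=> s t x y i Hs Ht Hx Hy.
  have := real_le1 i Hx; have := ev_bounds v i; have := sumd_le x y i.
  move=> H1 H2 H3; rewrite /cone_H; exact: cone_bound.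
Qed.

Close Scope R_scope.


Open Scope R_scope.

Lemma sum6 (F : 'I_6 -> R) :
  \big[Rplus/0]_(i < 6) F i = F o0 + (F o1 + (F o2 + (F o3 + (F o4 + (F o5 + 0))))).
Proof.
rewrite !big_ord_recl big_ord0.
do 6 (congr (_ + _); first by congr F; apply/val_inj).
Qed.

Definition Qp (x : Rvec 6) : Rvec 6 := fun i =>
  if i == o0 then 0 else if i == o1 then 0 else
  if i == o3 then x o3 + x o0 else if i == o5 then x o5 + x o1 else x i.

Definition ff (t : R) := Rmin (2 * t) 1.
Definition gg (t : R) := Rmax (2 * t - 1) 0.

Definition H5 (t : R) (x : Rvec 6) : Rvec 6 := fun i =>
  (1 - gg t) * ((1 - ff t) * x i + ff t * Qp x i) + gg t * ev o3 i.

Lemma ff_bounds t : 0 <= t <= 1 -> 0 <= ff t <= 1.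
Proof. rewrite /ff /Rmin; case: Rle_dec; lra. Qed.
Lemma gg_bounds t : 0 <= t <= 1 -> 0 <= gg t <= 1.
Proof. rewrite /gg /Rmax; case: Rle_dec; lra. Qed.
Lemma ff_lip s t : Rabs (ff s - ff t) <= 2 * Rabs (s - t).
Proof.
have [D1 D2] := abs_ge (s - t); apply: Rabs_le.
rewrite /ff /Rmin; do 2 case: Rle_dec; lra.
Qed.
Lemma gg_lip s t : Rabs (gg s - gg t) <= 2 * Rabs (s - t).
Proof.
have [D1 D2] := abs_ge (s - t); apply: Rabs_le.
rewrite /gg /Rmax; do 2 case: Rle_dec; lra.
Qed.
Lemma gg_pos_ff t : 0 < gg t -> ff t = 1.
Proof. rewrite /gg /ff /Rmax /Rmin; do 2 case: Rle_dec; lra. Qed.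
Lemma gg0 : gg 0 = 0. Proof. rewrite /gg /Rmax; case: Rle_dec; lra. Qed.
Lemma ff0 : ff 0 = 0. Proof. rewrite /ff /Rmin; case: Rle_dec; lra. Qed.
Lemma gg1 : gg 1 = 1. Proof. rewrite /gg /Rmax; case: Rle_dec; lra. Qed.

Lemma Qp_bounds x i : (forall j, 0 <= x j <= 1) -> 0 <= Qp x i <= 2.
Proof.
move=> H; have := H o0; have := H o1; have := H o3; have := H o5; have := H i.
rewrite /Qp; case: (i == o0); [lra|]; case: (i == o1); [lra|].
case: (i == o3); [lra|]; case: (i == o5); lra.
Qed.

Lemma Qp_diff x y i : Rabs (Qp y i - Qp x i) <= 2 * sumd x y.
Proof.
have := sumd_le x y i; have := sumd_le x y o0; have := sumd_le x y o1;
have := sumd_le x y o3; have := sumd_le x y o5.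
have P : 0 <= Rabs (y i - x i) by apply: Rabs_pos.
move=> A5 A3 A1 A0 Ai.
rewrite /Qp; case: (i == o0); first by rewrite Rminus_0_r Rabs_R0; lra.
case: (i == o1); first by rewrite Rminus_0_r Rabs_R0; lra.
case: (i == o3).
  apply: (Rle_trans _ (Rabs (y o3 - x o3) + Rabs (y o0 - x o0))); last lra.
  rewrite (_ : y o3 + y o0 - (x o3 + x o0) = (y o3 - x o3) + (y o0 - x o0)); last ring.
  exact: Rabs_triang.
case: (i == o5).
  apply: (Rle_trans _ (Rabs (y o5 - x o5) + Rabs (y o1 - x o1))); last lra.
  rewrite (_ : y o5 + y o1 - (x o5 + x o1) = (y o5 - x o5) + (y o1 - x o1)); last ring.
  exact: Rabs_triang.
lra.
Qed.

Lemma abs_mul_le u v U V : Rabs u <= U -> Rabs v <= V -> Rabs (u * v) <= U * V.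
Proof.
move=> Hu Hv; rewrite Rabs_mult; apply: Rmult_le_compat => //; exact: Rabs_pos.
Qed.

Lemma h5_bound a a' b b' X Y QX QY e S D :
  0 <= a <= 1 -> 0 <= a' <= 1 -> 0 <= b <= 1 -> 0 <= b' <= 1 -> 0 <= e <= 1 ->
  0 <= X <= 1 -> 0 <= Y <= 1 -> 0 <= QX <= 2 -> 0 <= QY <= 2 -> 0 <= D -> 0 <= S ->
  Rabs (a - a') <= 2 * D -> Rabs (b - b') <= 2 * D ->
  Rabs (Y - X) <= S -> Rabs (QY - QX) <= 2 * S ->
  Rabs (((1 - a) * ((1 - b) * Y + b * QY) + a * e) -
        ((1 - a') * ((1 - b') * X + b' * QX) + a' * e)) <= 20 * (D + S).
Proof.
move=> Ha0 Ha'0 Hb Hb' He HX HY HQX HQY HD HS Dab0 Dbb DY DQ.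
rewrite (_ : (1 - a) * ((1 - b) * Y + b * QY) + a * e =
   (1 - a) * ((1 - b) * Y + b * QY) + (1 - (1 - a)) * e); last ring.
rewrite (_ : (1 - a') * ((1 - b') * X + b' * QX) + a' * e =
   (1 - a') * ((1 - b') * X + b' * QX) + (1 - (1 - a')) * e); last ring.
have Dab : Rabs ((1 - a) - (1 - a')) <= 2 * D.
  by rewrite (_ : (1 - a) - (1 - a') = a' - a); [rewrite Rabs_minus_sym|ring].
have Ha : 0 <= 1 - a <= 1 by lra.
have Ha' : 0 <= 1 - a' <= 1 by lra.
move: (1 - a) (1 - a') Ha Ha' Dab => {Ha0 Ha'0 Dab0 a a'} a a' Ha Ha' Dab.
have E : (a * ((1 - b) * Y + b * QY) + (1 - a) * e) -
        (a' * ((1 - b') * X + b' * QX) + (1 - a') * e) =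
   (a - a') * (((1 - b) * Y + b * QY) - e) +
   a' * ((1 - b) * (Y - X) + (b' - b) * X + b * (QY - QX) + (b - b') * QX) by ring.
rewrite E.
have B1 : Rabs (((1 - b) * Y + b * QY) - e) <= 3.
  apply: Rabs_le; nra.
have B2 : Rabs ((1 - b) * (Y - X)) <= 1 * S by apply: abs_mul_le => //; apply: Rabs_le; lra.
have B3 : Rabs ((b' - b) * X) <= (2 * D) * 1.
  by apply: abs_mul_le; [rewrite Rabs_minus_sym|apply: Rabs_le; lra].
have B4 : Rabs (b * (QY - QX)) <= 1 * (2 * S) by apply: abs_mul_le => //; apply: Rabs_le; lra.
have B5 : Rabs ((b - b') * QX) <= (2 * D) * 2 by apply: abs_mul_le => //; apply: Rabs_le; lra.
have B6 : Rabs ((1 - b) * (Y - X) + (b' - b) * X + b * (QY - QX) + (b - b') * QX)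
          <= S + 2 * D + 2 * S + 4 * D.
  have T1 := Rabs_triang ((1 - b) * (Y - X) + (b' - b) * X + b * (QY - QX)) ((b - b') * QX).
  have T2 := Rabs_triang ((1 - b) * (Y - X) + (b' - b) * X) (b * (QY - QX)).
  have T3 := Rabs_triang ((1 - b) * (Y - X)) ((b' - b) * X).
  lra.
have B7 : Rabs ((a - a') * (((1 - b) * Y + b * QY) - e)) <= (2 * D) * 3 by apply: abs_mul_le.
have B8 : Rabs (a' * ((1 - b) * (Y - X) + (b' - b) * X + b * (QY - QX) + (b - b') * QX))
          <= 1 * (S + 2 * D + 2 * S + 4 * D).
  by apply: abs_mul_le => //; apply: Rabs_le; lra.
have T := Rabs_triang ((a - a') * (((1 - b) * Y + b * QY) - e))
   (a' * ((1 - b) * (Y - X) + (b' - b) * X + b * (QY - QX) + (b - b') * QX)).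
lra.
Qed.

Definition T1 (t : {set 'I_6}) : {set 'I_6} :=
  t :|: ((if o0 \in t then [set o3] else set0) :|: (if o1 \in t then [set o5] else set0)).
Definition T2 (t : {set 'I_6}) : {set 'I_6} := (T1 t :|: [set o3]) :\ o0 :\ o1.

Definition T1m (g : seq bool) :=
  orm g (orm (if nth false g 0 then singm 3 else nseq 6 false)
             (if nth false g 1 then singm 5 else nseq 6 false)).
Definition T2m (g : seq bool) := clr (clr (orm (T1m g) (singm 3)) 0) 1.

Lemma bits_o3 : bits [set o3] = singm 3. Proof. exact: (@bits_single 3 isT). Qed.
Lemma bits_o4 : bits [set o4] = singm 4. Proof. exact: (@bits_single 4 isT). Qed.
Lemma bits_o5 : bits [set o5] = singm 5. Proof. exact: (@bits_single 5 isT). Qed.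

Lemma bits_T1 t : bits (T1 t) = T1m (bits t).
Proof.
rewrite /T1 /T1m !bitsU (in_bits t o0) (in_bits t o1).
by case: (nth false (bits t) o0); case: (nth false (bits t) o1);
  rewrite ?bits_o3 ?bits_o5 ?bits0.
Qed.

Lemma bits_T2 t : bits (T2 t) = T2m (bits t).
Proof. by rewrite /T2 /T2m !bitsD1 bitsU bits_T1 bits_o3. Qed.

Lemma link5_model :
  linkm (singm 4) (singm 3) &&
  all (fun g => linkm (singm 4) g ==> linkm (singm 4) (T1m g) && linkm (singm 4) (T2m g)) (allbv 6).
Proof. by vm_compute. Qed.

Lemma notinT1 (t : {set 'I_6}) i : i \notin T1 t ->
  [/\ i \notin t, (i == o3) ==> (o0 \notin t) & (i == o5) ==> (o1 \notin t)].
Proof.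
rewrite /T1 !inE negb_or => /andP [H1 H2]; split => //.
- apply/implyP => /eqP Ei; move: H2; rewrite Ei.
  by case: (o0 \in t); case: (o1 \in t); rewrite !inE.
- apply/implyP => /eqP Ei; move: H2; rewrite Ei.
  by case: (o0 \in t); case: (o1 \in t); rewrite !inE.
Qed.

Lemma T1_zero (t : {set 'I_6}) (x : Rvec 6) i :
  (forall j, j \notin t -> x j = 0) -> i \notin T1 t -> x i = 0 /\ Qp x i = 0.
Proof.
move=> Hz /notinT1 [H1 H2 H3]; split; first exact: Hz.
rewrite /Qp; case: (ord6_cases i) H1 H2 H3 => [->|[->|[->|[->|[->|->]]]]] //= H1 H2 H3.
- exact: Hz.
- by rewrite (Hz o3) // (Hz o0) //; ring.
- exact: Hz.
- by rewrite (Hz o5) // (Hz o1) //; ring.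
Qed.

Lemma link5_contractible : contractible (link (Defs.Delta C0) [set o4]).
Proof.
set K := link _ _.
have HK g : (g \in K) = linkm (singm 4) (bits g) by rewrite linkE bits_o4.
case/andP: link5_model => Hm3 /allP Hm.
have HK1 t : t \in K -> (T1 t \in K) && (T2 t \in K).
  move=> Ht; rewrite !HK bits_T1 bits_T2; have := Hm _ (bits_all t).
  by rewrite -HK Ht.
exists (ev o3), H5; split.
- split; first by move=> i; have := ev_bounds o3 i; lra.
  split; first exact: sum_ev.
  exists [set o3]; split; first by rewrite HK bits_o3.
  by move=> i; rewrite inE /ev => /negbTE ->.
- move=> t x Ht Hx.
  have Hb := fun j => real_le1 j Hx.
  case: Hx => H0 [Hs [t0 [Ht0 Hz]]].
  have [Hf0 Hf1] := ff_bounds Ht; have [Hg0 Hg1] := gg_bounds Ht.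
  split.
  + move=> i; rewrite /H5.
    have [Q0 _] := Qp_bounds i Hb; have [E0 _] := ev_bounds o3 i; have X0 := H0 i.
    apply: Rplus_le_le_0_compat; apply: Rmult_le_pos; try lra.
    apply: Rplus_le_le_0_compat; apply: Rmult_le_pos; lra.
  split.
  + move: Hs; rewrite !sum6 /H5 /Qp /ev /= => Hs.
    match goal with |- ?L = _ =>
      transitivity ((1 - gg t) * ((1 - ff t) * (x o0 + (x o1 + (x o2 + (x o3 + (x o4 + (x o5 + 0)))))) + ff t * (x o0 + (x o1 + (x o2 + (x o3 + (x o4 + (x o5 + 0))))))) + gg t) end.
      ring.
    rewrite Hs; ring.
  + case: (Rle_lt_dec (gg t) 0) => Hg.
    * exists (T1 t0); split; first by case/andP: (HK1 _ Ht0).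
      move=> i Hi; have [Hx0 HQ0] := T1_zero Hz Hi.
      rewrite /H5 Hx0 HQ0 (_ : gg t = 0); [ring|lra].
    * have Hf := gg_pos_ff Hg.
      exists (T2 t0); split; first by case/andP: (HK1 _ Ht0).
      move=> i Hi.
      case: (eqVneq i o0) => [->|ne0]; first by rewrite /H5 /Qp /ev /= Hf; ring.
      case: (eqVneq i o1) => [->|ne1]; first by rewrite /H5 /Qp /ev /= Hf; ring.
      move: Hi; rewrite /T2 !in_setD1 in_setU in_set1 ne0 ne1 /= negb_or => /andP [HiT1 Hi3].
      have [Hx0 HQ0] := T1_zero Hz HiT1.
      by rewrite /H5 Hx0 HQ0 /ev (negbTE Hi3); ring.
- move=> x _; apply: functional_extensionality => i; rewrite /H5 gg0 ff0; ring.
- move=> x _; apply: functional_extensionality => i; rewrite /H5 gg1; ring.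
- apply: (@cont_of_bound _ _ 20); first lra.
  move=> s t x y i Hs Ht Hx Hy; rewrite /H5.
  have Hbx := fun j => real_le1 j Hx; have Hby := fun j => real_le1 j Hy.
  have S0 : 0 <= sumd x y.
    apply: (Rle_trans _ (Rabs (y i - x i))); [exact: Rabs_pos|exact: sumd_le].
  apply: h5_bound.
  all: try (exact: gg_bounds) ; try (exact: ff_bounds); try (exact: ev_bounds);
       try (exact: Hbx); try (exact: Hby); try (exact: Qp_bounds); try (exact: Rabs_pos);
       try (exact: gg_lip); try (exact: ff_lip); try (exact: sumd_le); try (exact: Qp_diff);
       try assumption.
Qed.

Lemma no_obstruction1 (s : {set 'I_6}) : ~ local_obstruction1 C0 s.
Proof.
case=> HD [HC Hn]; apply: Hn.
have H1 := allP all_cone _ (bits_all s).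
have H2 : Deltam (bits s) && (bits s \notin C0m) by rewrite -DeltaE HD -C0mE HC.
have {H1 H2} := implyP H1 H2.
case/orP => [/eqP E|].
  have -> : s = [set o4] by apply: bits_inj; rewrite E bits_o4.
  exact: link5_contractible.
case/hasP => vi; rewrite mem_iota => /andP [_ Hvi] /andP [Hv /allP Hall].
apply: (@cone_contractible _ (Ordinal Hvi)).
  by rewrite linkE bits_single.
move=> t Ht; rewrite linkE bitsU bits_single.
have := Hall _ (bits_all t); rewrite -linkE Ht; exact.
Qed.

Close Scope R_scope.


Open Scope R_scope.

Definition seg d (a b : Rvec d) (t : R) : Rvec d := fun i => t * b i + (1 - t) * a i.

Lemma seg0 d (a b : Rvec d) : seg a b 0 = a.
Proof. apply: functional_extensionality => i; rewrite /seg; ring. Qed.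
Lemma seg1 d (a b : Rvec d) : seg a b 1 = b.
Proof. apply: functional_extensionality => i; rewrite /seg; ring. Qed.

Lemma conv_seg d (S : Rvec d -> Prop) a b t :
  convex_set S -> S a -> S b -> 0 <= t <= 1 -> S (seg a b t).
Proof. by move=> H Ha Hb Ht; apply: H. Qed.

Lemma bound_vec d (f : Rvec d) : exists M, 0 < M /\ forall i, Rabs (f i) <= M.
Proof.
elim: d f => [|d IH] f.
  by exists 1; split; [lra|case].
have [M [HM HMb]] := IH (fun i => f (lift ord0 i)).
exists (Rmax (Rabs (f ord0)) M); split.
  apply: (Rlt_le_trans _ M) => //; exact: Rmax_r.
move=> i; case: (unliftP ord0 i) => [j ->|->].
- apply: (Rle_trans _ M); [exact: HMb|exact: Rmax_r].
- exact: Rmax_l.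
Qed.

Lemma open_line d (S : Rvec d -> Prop) a b t0 :
  Defs.open_set S -> S (seg a b t0) ->
  exists del, 0 < del /\ forall t, Rabs (t - t0) < del -> S (seg a b t).
Proof.
move=> HS H0; have [eps [He Hy]] := HS _ H0.
have [M [HM HMb]] := bound_vec (fun i => b i - a i).
exists (eps / M); split; first by apply: Rdiv_lt_0_compat.
move=> t Ht; apply: Hy => i.
rewrite (_ : seg a b t i - seg a b t0 i = (t - t0) * (b i - a i)); last by rewrite /seg; ring.
rewrite Rabs_mult.
apply: (Rle_lt_trans _ (Rabs (t - t0) * M)).
  apply: Rmult_le_compat_l; [exact: Rabs_pos|exact: HMb].
apply: (Rlt_le_trans _ (eps / M * M)).
  by apply: Rmult_lt_compat_r.
by right; field; lra.
Qed.

Lemma lub_approx (E : R -> Prop) m : is_lub E m ->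
  forall eta, 0 < eta -> exists t, E t /\ m - eta < t.
Proof.
move=> [Hub Hl] eta He.
apply: NNPP => Hn.
have : m <= m - eta.
  apply: Hl => t Et.
  apply: Rnot_lt_le => Hlt; apply: Hn; by exists t.
lra.
Qed.

Lemma lub_01 (E : R -> Prop) : E 0 -> (forall t, E t -> t <= 1) ->
  exists m, is_lub E m /\ 0 <= m <= 1.
Proof.
move=> E0 H1.
have [m Hm] := completeness E (ex_intro _ 1 H1) (ex_intro _ 0 E0).
exists m; split => //; case: Hm => Hub Hl; split.
- exact: Hub.
- exact: Hl.
Qed.

Definition pb (P : Prop) : bool := if excluded_middle_informative P then true else false.
Lemma pbP (P : Prop) : pb P <-> P.
Proof. rewrite /pb; case: excluded_middle_informative => //. Qed.

Definition pat d (U : 'I_6 -> Rvec d -> Prop) (p : Rvec d) : {set 'I_6} :=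
  [set k | pb (U k p)].
Lemma in_pat d (U : 'I_6 -> Rvec d -> Prop) p k : k \in pat U p <-> U k p.
Proof. rewrite inE; exact: pbP. Qed.

Definition C0facts (c : seq bool) : bool :=
  let m := nth false c in
  [&& m 4%nat ==> m 3%nat || m 5%nat, (m 3%nat && m 5%nat) ==> m 2%nat, (m 0%nat && m 2%nat) ==> m 1%nat,
      (m 1%nat && m 2%nat) ==> m 0%nat, (m 0%nat && m 1%nat) ==> ~~ m 4%nat & m 3%nat ==> m 4%nat].

Lemma C0facts_ok : all C0facts C0m. Proof. by vm_compute. Qed.

Lemma cw_in l : l \in C0L -> cw l \in C0.
Proof. by move=> H; rewrite C0E; apply: map_f. Qed.

Close Scope R_scope.


Open Scope R_scope.

Lemma le_help l t A M : 0 < l -> 0 <= t <= 1 -> 0 <= A -> A <= M -> l * t * A <= l * M.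
Proof. move=> Hl Ht HA HM; have: t * A <= M by nra. nra. Qed.

Lemma C0_non_convex : ~ convex_code C0.
Proof.
case=> d [X [U [HXo HXc HU HR]]].
have Uo k : Defs.open_set (U k) by case: (HU k).
have Uc k : convex_set (U k) by case: (HU k) => _ [].
have Us k p : U k p -> X p by case: (HU k) => _ [_]; apply.
have Hpat p : X p -> pat U p \in C0.
  by move=> Hp; apply/HR; exists p; split => // k; rewrite in_pat.
have F p : X p -> C0facts (bits (pat U p)) by move=> /Hpat; exact: (C0_prop C0facts_ok).
have mem (k : 'I_6) p : (nth false (bits (pat U p)) k) = pb (U k p).
  by rewrite -in_bits inE.
have m0 p : nth false (bits (pat U p)) 0%nat = pb (U o0 p) := mem o0 p.
have m1 p : nth false (bits (pat U p)) 1%nat = pb (U o1 p) := mem o1 p.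
have m2 p : nth false (bits (pat U p)) 2%nat = pb (U o2 p) := mem o2 p.
have m3 p : nth false (bits (pat U p)) 3%nat = pb (U o3 p) := mem o3 p.
have m4 p : nth false (bits (pat U p)) 4%nat = pb (U o4 p) := mem o4 p.
have m5 p : nth false (bits (pat U p)) 5%nat = pb (U o5 p) := mem o5 p.
have Fm p : X p -> let m := nth false (bits (pat U p)) in
  [&& m 4%nat ==> m 3%nat || m 5%nat, (m 3%nat && m 5%nat) ==> m 2%nat, (m 0%nat && m 2%nat) ==> m 1%nat,
      (m 1%nat && m 2%nat) ==> m 0%nat, (m 0%nat && m 1%nat) ==> ~~ m 4%nat & m 3%nat ==> m 4%nat].
  exact: F.
have F1 p : X p -> U o4 p -> U o3 p \/ U o5 p.
  move=> Hp /pbP H; move: (Fm p Hp) => /=; rewrite !inE H.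
  by case/and5P => /orP [] /pbP; tauto.
have F2 p : X p -> U o3 p -> U o5 p -> U o2 p.
  move=> Hp /pbP A /pbP B; move: (Fm p Hp) => /=; rewrite !inE A B.
  by case/and5P => _ /pbP.
have F3 p : X p -> U o0 p -> U o2 p -> U o1 p.
  move=> Hp /pbP A /pbP B; move: (Fm p Hp) => /=; rewrite !inE A B.
  by case/and5P => _ _ /pbP.
have F3' p : X p -> U o1 p -> U o2 p -> U o0 p.
  move=> Hp /pbP A /pbP B; move: (Fm p Hp) => /=; rewrite !inE A B.
  by case/and5P => _ _ _ /pbP.
have F4 p : X p -> U o0 p -> U o1 p -> ~ U o4 p.
  move=> Hp /pbP A /pbP B /pbP C; move: (Fm p Hp) => /=; rewrite !inE A B C.
  by case/and5P.
have F5 p : X p -> U o3 p -> U o4 p.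
  move=> Hp /pbP A; move: (Fm p Hp) => /=; rewrite !inE A.
  by case/and5P => _ _ _ _ /andP [_ /pbP].
have [a [Xa Ha]] := proj1 (HR (cw [:: 1; 4; 5]%nat)) (cw_in (isT : [:: 1; 4; 5]%nat \in C0L)).
have [b [Xb Hb]] := proj1 (HR (cw [:: 2; 5; 6]%nat)) (cw_in (isT : [:: 2; 5; 6]%nat \in C0L)).
have [x [Xx Hx]] := proj1 (HR (cw [:: 1; 2; 3]%nat)) (cw_in (isT : [:: 1; 2; 3]%nat \in C0L)).
have a1 : U o0 a by apply/Ha; rewrite inE.
have a4 : U o3 a by apply/Ha; rewrite inE.
have a5 : U o4 a by apply/Ha; rewrite inE.
have b2 : U o1 b by apply/Hb; rewrite inE.
have b5 : U o4 b by apply/Hb; rewrite inE.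
have b4 : ~ U o3 b by move/Hb; rewrite inE.
have x1 : U o0 x by apply/Hx; rewrite inE.
have x2 : U o1 x by apply/Hx; rewrite inE.
have x3 : U o2 x by apply/Hx; rewrite inE.
have Xseg (p q : Rvec d) t : X p -> X q -> 0 <= t <= 1 -> X (seg p q t).
  by move=> Hp Hq Ht; apply: conv_seg.
have [tc [Htc [c3 c5]]] : exists tc, 0 <= tc <= 1 /\ U o2 (seg a b tc) /\ U o4 (seg a b tc).
  pose E t := 0 <= t <= 1 /\ U o3 (seg a b t).
  have E0 : E 0 by split; [lra|rewrite seg0].
  have [t1 [Hl Ht1]] := lub_01 E0 (fun t Et => proj2 (proj1 Et)).
  have q5 : U o4 (seg a b t1) by apply: conv_seg.
  have Xq : X (seg a b t1) by apply: Xseg.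
  case: (F1 _ Xq q5) => Hq.
  - exfalso; have [del [Hdel Hd]] := open_line (Uo o3) Hq.
    case: (Rle_lt_or_eq_dec t1 1 (proj2 Ht1)) => H1.
    + pose t' := Rmin (t1 + del / 2) 1.
      have Ht' : E t'.
        split; first by rewrite /t' /Rmin; case: Rle_dec; lra.
        apply: Hd; rewrite /t' /Rmin; case: Rle_dec => ?; apply: Rabs_def1; lra.
      have := proj1 Hl _ Ht'; rewrite /t' /Rmin; case: Rle_dec; lra.
    + by move: Hq; rewrite H1 seg1.
  - have [del [Hdel Hd]] := open_line (Uo o5) Hq.
    have [t [[Ht Et] Hlt]] := lub_approx Hl Hdel.
    have Htt : t <= t1 by apply: (proj1 Hl).
    have H6 : U o5 (seg a b t) by apply: Hd; apply: Rabs_def1; lra.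
    exists t; split => //; split; first by apply: F2 => //; apply: Xseg.
    by apply: F5 => //; apply: Xseg.
set c := seg a b tc in c3 c5.
have Xc : X c by apply: Xseg.
pose E t := 0 <= t <= 1 /\ U o0 (seg x c t) /\ U o1 (seg x c t).
have E0 : E 0 by split; [lra|rewrite seg0].
have [s1 [Hl Hs1]] := lub_01 E0 (fun t Et => proj2 (proj1 Et)).
set w := seg x c s1.
have w3 : U o2 w by apply: conv_seg.
have Xw : X w by apply: Xseg.
have c1 : ~ U o0 c.
  move=> H; apply: (F4 _ Xc H) => //; exact: (F3 _ Xc H c3).
have ClA : ~ (U o0 w /\ U o1 w).
  case=> w1 w2.
  case: (Rle_lt_or_eq_dec s1 1 (proj2 Hs1)) => H1; last by apply: c1; move: w1; rewrite /w H1 seg1.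
  have [d1 [Hd1 Hdd1]] := open_line (Uo o0) w1.
  have [d2 [Hd2 Hdd2]] := open_line (Uo o1) w2.
  pose del := Rmin d1 d2.
  have Hdel : 0 < del by apply: Rmin_glb_lt.
  have Hd1' : del <= d1 by apply: Rmin_l.
  have Hd2' : del <= d2 by apply: Rmin_r.
  pose t' := Rmin (s1 + del / 2) 1.
  have Htt : Rabs (t' - s1) < del by rewrite /t' /Rmin; case: Rle_dec => ?; apply: Rabs_def1; lra.
  have Ht' : E t'.
    split; first by rewrite /t' /Rmin; case: Rle_dec; lra.
    split; [apply: Hdd1|apply: Hdd2]; lra.
  have := proj1 Hl _ Ht'; rewrite /t' /Rmin; case: Rle_dec; lra.
have ClB : s1 < 1.
  case: (Rle_lt_or_eq_dec s1 1 (proj2 Hs1)) => // H1.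
  exfalso.
  have c5' : U o4 (seg x c 1) by rewrite seg1.
  have [del [Hdel Hd]] := open_line (Uo o4) c5'.
  have [t [[Ht [Et1 Et2]] Hlt]] := lub_approx Hl Hdel.
  have Htt : t <= s1 by apply: (proj1 Hl).
  have H5 : U o4 (seg x c t) by apply: Hd; apply: Rabs_def1; lra.
  by apply: (F4 _ (Xseg _ _ _ Xx Xc Ht) Et1 Et2).
have [eps [Heps Hop]] := Uo o2 _ w3.
have [M [HM HMb]] := bound_vec (fun i => a i - b i).
pose eta := eps / M * (1 - s1) / 2.
have Heta : 0 < eta.
  rewrite /eta; apply: Rdiv_lt_0_compat; [|lra].
  apply: Rmult_lt_0_compat; [apply: Rdiv_lt_0_compat|]; lra.
have [s [[Hs [Es1 Es2]] Hlt]] := lub_approx Hl Heta.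
have Hss : s <= s1 by apply: (proj1 Hl).
have Hss' : s < s1.
  case: (Rle_lt_or_eq_dec s s1 Hss) => // E'.
  by exfalso; apply: ClA; rewrite /w -E'.
set z := seg x c s in Es1 Es2.
have Xz : X z by apply: Xseg.
pose lam := (s1 - s) / (1 - s).
have Hlam : 0 < lam < 1.
  rewrite /lam; split; first by apply: Rdiv_lt_0_compat; lra.
  apply/(Rmult_lt_reg_r (1 - s)); first lra.
  rewrite /Rdiv Rmult_assoc Rinv_l; lra.
have Hlam2 : lam * M < eps.
  have : lam <= (s1 - s) / (1 - s1).
    rewrite /lam /Rdiv; apply: Rmult_le_compat_l; first lra.
    apply: Rinv_le_contravar; lra.
  have : (s1 - s) / (1 - s1) * M < eps.
    apply/(Rmult_lt_reg_r (1 - s1)); first lra.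
    have E1 : (s1 - s) / (1 - s1) * M * (1 - s1) = (s1 - s) * M by field; lra.
    rewrite E1.
    have : s1 - s < eta by lra.
    rewrite /eta => H.
    have E2 : eps / M * (1 - s1) / 2 * M = eps * (1 - s1) / 2 by field; lra.
    have : (s1 - s) * M < eps / M * (1 - s1) / 2 * M by apply: Rmult_lt_compat_r.
    rewrite E2; nra.
  nra.
set qa := seg z a lam.
set qb := seg z b lam.
have Xqa : X qa by apply: Xseg => //; lra.
have Xqb : X qb by apply: Xseg => //; lra.
have qa1 : U o0 qa by apply: conv_seg => //; lra.
have qb2 : U o1 qb by apply: conv_seg => //; lra.
have Dqa i : qa i - w i = lam * tc * (a i - b i).
  rewrite /qa /w /z /c /seg /lam; field; lra.
have Dqb i : qb i - w i = lam * (1 - tc) * (b i - a i).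
  rewrite /qb /w /z /c /seg /lam; field; lra.
have qa3 : U o2 qa.
  apply: Hop => i; rewrite Dqa Rabs_mult.
  apply: (Rle_lt_trans _ (lam * M)); last exact: Hlam2.
  rewrite Rabs_mult (Rabs_right lam); last lra.
  rewrite (Rabs_right tc); last lra.
  apply: le_help; [lra|lra|exact: Rabs_pos|exact: HMb].
have qb3 : U o2 qb.
  apply: Hop => i; rewrite Dqb Rabs_mult.
  apply: (Rle_lt_trans _ (lam * M)); last exact: Hlam2.
  rewrite Rabs_mult (Rabs_right lam); last lra.
  rewrite (Rabs_right (1 - tc)); last lra.
  rewrite -Rabs_Ropp (_ : - (b i - a i) = a i - b i); last ring.
  apply: le_help; [lra|lra|exact: Rabs_pos|exact: HMb].
have qa2 : U o1 qa by apply: F3.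
have qb1 : U o0 qb by apply: F3'.
have Ew : w = seg qa qb tc.
  apply: functional_extensionality => i.
  rewrite /qa /qb /w /z /c /seg /lam; field; lra.
apply: ClA; rewrite Ew; split; apply: conv_seg => //.
Qed.

Close Scope R_scope.


Open Scope R_scope.

Definition cx : 'I_3 := @Ordinal 3 0 isT.
Definition cy : 'I_3 := @Ordinal 3 1 isT.
Definition cz : 'I_3 := @Ordinal 3 2 isT.

Definition ineq := (R * R * R * R)%type.
Definition holds (q : ineq) (p : Rvec 3) : Prop :=
  let: (a, b, c, e) := q in a * p cx + b * p cy + c * p cz < e.
Definition inpoly (l : seq ineq) (p : Rvec 3) : bool := all (fun q => pb (holds q p)) l.
Fixpoint polyP (l : seq ineq) (p : Rvec 3) : Prop :=
  if l is q :: l' then holds q p /\ polyP l' p else True.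

Lemma inpolyP l p : inpoly l p <-> polyP l p.
Proof.
elim: l => [|q l IH] //=; split.
- by case/andP => /pbP H1 /IH H2.
- by case=> H1 /IH H2; apply/andP; split => //; apply/pbP.
Qed.

Lemma coord3 (i : 'I_3) : i = cx \/ i = cy \/ i = cz.
Proof.
case: i => [[|[|[|m]]] Hm].
- by left; apply/val_inj.
- by right; left; apply/val_inj.
- by right; right; apply/val_inj.
- by [].
Qed.

Lemma term_bound u d del : Rabs d < del -> u * d <= Rabs u * del.
Proof.
move=> H; apply: (Rle_trans _ (Rabs (u * d))); first exact: Rle_abs.
rewrite Rabs_mult; apply: Rmult_le_compat_l; [exact: Rabs_pos|lra].
Qed.

Lemma holds_open q p : holds q p -> exists eps, 0 < eps /\
  forall y : Rvec 3, (forall i, Rabs (y i - p i) < eps) -> holds q y.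
Proof.
case: q => [[[a b] c] e] /= H.
set sl := e - (a * p cx + b * p cy + c * p cz).
have Hsl : 0 < sl by rewrite /sl; lra.
set K := Rabs a + Rabs b + Rabs c + 1.
have HK : 0 < K by rewrite /K; have := Rabs_pos a; have := Rabs_pos b; have := Rabs_pos c; lra.
set del := sl / K.
have Hdel : 0 < del by apply: Rdiv_lt_0_compat.
exists del; split => // y Hy.
have B0 := term_bound a (Hy cx); have B1 := term_bound b (Hy cy); have B2 := term_bound c (Hy cz).
have E : Rabs a * del + Rabs b * del + Rabs c * del + del = sl.
  have := Rabs_pos a; have := Rabs_pos b; have := Rabs_pos c.
  rewrite /del /K; move=> *; field; lra.
have E2 : a * y cx + b * y cy + c * y cz =
  (a * p cx + b * p cy + c * p cz) + a * (y cx - p cx) + b * (y cy - p cy) + c * (y cz - p cz) by ring.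
rewrite E2; rewrite /sl in E; lra.
Qed.

Lemma poly_open l : Defs.open_set (fun p => inpoly l p).
Proof.
elim: l => [|q l IH] p /=.
  by move=> _; exists 1; split; [lra|].
case/andP => /pbP Hq Hl.
have [e1 [He1 H1]] := holds_open Hq.
have [e2 [He2 H2]] := IH _ Hl.
exists (Rmin e1 e2); split; first exact: Rmin_glb_lt.
move=> y Hy; apply/andP; split.
- apply/pbP; apply: H1 => i; apply: (Rlt_le_trans _ _ _ (Hy i)); exact: Rmin_l.
- apply: H2 => i; apply: (Rlt_le_trans _ _ _ (Hy i)); exact: Rmin_r.
Qed.

Lemma holds_conv q x y t : holds q x -> holds q y -> 0 <= t <= 1 ->
  holds q (fun i => t * x i + (1 - t) * y i).
Proof.
case: q => [[[a b] c] e] /= Hx Hy Ht.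
have E : a * (t * x cx + (1 - t) * y cx) + b * (t * x cy + (1 - t) * y cy) +
         c * (t * x cz + (1 - t) * y cz) =
         t * (a * x cx + b * x cy + c * x cz) + (1 - t) * (a * y cx + b * y cy + c * y cz) by ring.
rewrite E.
set A := a * x cx + b * x cy + c * x cz in Hx *.
set B := a * y cx + b * y cy + c * y cz in Hy *.
have h2 : 0 <= (1 - t) * (e - B) by apply: Rmult_le_pos; lra.
case: (Rle_lt_or_eq_dec 0 t (proj1 Ht)) => Ht0.
- have h1 : 0 < t * (e - A) by apply: Rmult_lt_0_compat; lra.
  lra.
- rewrite -Ht0; lra.
Qed.

Lemma poly_conv l : convex_set (fun p => inpoly l p).
Proof.
move=> x y t Hx Hy Ht; apply/inpolyP; move/inpolyP: Hx; move/inpolyP: Hy.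
elim: l => [|q l IH] //= [Hy1 Hy2] [Hx1 Hx2]; split; last exact: IH.
exact: holds_conv.
Qed.

Lemma inpoly_cat l1 l2 p : inpoly (l1 ++ l2) p = inpoly l1 p && inpoly l2 p.
Proof. by rewrite /inpoly all_cat. Qed.

Close Scope R_scope.


Definition pat3 (P : 'I_6 -> seq ineq) (p : Rvec 3) : {set 'I_6} := [set k | inpoly (P k) p].
Definition polyset (P : 'I_6 -> seq ineq) (tau : {set 'I_6}) : seq ineq :=
  flatten [seq P k | k <- [seq k <- ords | k \in tau]].

Lemma all_flat (T : Type) (a : pred T) (ss : seq (seq T)) : all a (flatten ss) = all (all a) ss.
Proof. by elim: ss => //= s ss IH; rewrite all_cat IH. Qed.

Lemma inpoly_set P tau p : inpoly (polyset P tau) p = (tau \subset pat3 P p).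
Proof.
rewrite /polyset /inpoly all_flat all_map.
apply/allP/subsetP => [H k Hk|H k Hk].
- by rewrite inE; apply: H; rewrite mem_filter Hk ordsP.
- by move: Hk; rewrite mem_filter => /andP [Hk _]; have := H k Hk; rewrite inE.
Qed.

Lemma GL (i : 'I_6) (P : 'I_6 -> seq ineq) (h : {set 'I_6} -> {set 'I_6})
  (R1 : forall p, exists c, c \in C0 /\ pat3 P p = h c)
  (R2 : forall c, c \in C0 -> exists p, pat3 P p = h c)
  (R3 : forall T : code 6, is_trunk C0 T -> T != Tk C0 [set i] ->
          exists tau : {set 'I_6}, T = [set c in C0 | tau \subset h c])
  m (T0 : code 6) (T : 'I_m -> code 6) :
  is_trunk C0 T0 -> T0 != Tk C0 [set i] ->
  (forall j, is_trunk C0 (T j) /\ T j != Tk C0 [set i]) ->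
  convex_code [set [set j | c \in T j] | c in T0].
Proof.
move=> H0 N0 HT.
have [tau0 E0] := R3 _ H0 N0.
pose tauf j := odflt set0 [pick tau : {set 'I_6} | T j == [set c in C0 | tau \subset h c]].
have Et j : T j = [set c in C0 | tauf j \subset h c].
  rewrite /tauf; case: pickP => [tau /eqP //|Hn].
  have [tau Etau] := R3 _ (proj1 (HT j)) (proj2 (HT j)).
  by move: (Hn tau); rewrite Etau eqxx.
exists 3, (fun p => inpoly (polyset P tau0) p),
  (fun j p => inpoly (polyset P tau0 ++ polyset P (tauf j)) p); split.
- exact: poly_open.
- exact: poly_conv.
- move=> j; split; first exact: poly_open.
  split; first exact: poly_conv.
  by move=> p; rewrite inpoly_cat => /andP [].
- move=> s; split.
  + case/imsetP => c Hc ->.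
    have HcC : c \in C0 by move: Hc; rewrite E0 inE => /andP [].
    have Hc0 : tau0 \subset h c by move: Hc; rewrite E0 inE => /andP [].
    have [p Hp] := R2 _ HcC.
    exists p; split; first by rewrite inpoly_set Hp.
    move=> j; rewrite inpoly_cat !inpoly_set Hp Hc0 /= inE Et inE HcC /=.
    by [].
  + case=> p [Hp HU].
    have [c [HcC Ec]] := R1 p.
    have Hc : c \in T0 by rewrite E0 inE HcC -Ec -inpoly_set.
    apply/imsetP; exists c => //; apply/setP => j.
    rewrite inE Et inE HcC /=.
    apply/idP/idP => [/HU|Hj].
    * by rewrite inpoly_cat !inpoly_set Ec => /andP [].
    * by apply/HU; rewrite inpoly_cat !inpoly_set Ec Hj andbT -Ec -inpoly_set.
Qed.


Definition design (i : 'I_6) : Prop :=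
  exists (P : 'I_6 -> seq ineq) (h : {set 'I_6} -> {set 'I_6}),
  [/\ (forall p, exists c, c \in C0 /\ pat3 P p = h c),
      (forall c, c \in C0 -> exists p, pat3 P p = h c) &
      (forall T : code 6, is_trunk C0 T -> T != Tk C0 [set i] ->
          exists tau : {set 'I_6}, T = [set c in C0 | tau \subset h c])].

Lemma design_conv i : design i -> forall m (T0 : code 6) (T : 'I_m -> code 6),
  is_trunk C0 T0 -> T0 != Tk C0 [set i] ->
  (forall j, is_trunk C0 (T j) /\ T j != Tk C0 [set i]) ->
  convex_code [set [set j | c \in T j] | c in T0].
Proof. by case=> P [h [R1 R2 R3]]; apply: GL. Qed.

Definition tkm (sm : seq bool) : seq bool := [seq subm sm c | c <- C0m].

Lemma sieve_eqC (C : {set {set 'I_6}}) (f g : {set 'I_6} -> bool) :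
  (forall c, c \in C -> f c = g c) -> [set c in C | f c] = [set c in C | g c].
Proof.
move=> H; apply/setP => c; rewrite !in_set.
by apply/andP/andP => [[Hc Hf]|[Hc Hg]]; split => //; [rewrite -H|rewrite H].
Qed.

Lemma sieve_eq (f g : {set 'I_6} -> bool) :
  (forall c, c \in C0 -> f c = g c) -> [set c in C0 | f c] = [set c in C0 | g c].
Proof. exact: sieve_eqC. Qed.

Lemma in_sieve (C : {set {set 'I_6}}) (f : {set 'I_6} -> bool) c :
  (c \in [set c in C | f c]) = (c \in C) && f c.
Proof. by rewrite in_set. Qed.

Lemma in_Tk (C : {set {set 'I_6}}) s c : (c \in Tk C s) = (c \in C) && (s \subset c).
Proof. by rewrite /Tk in_set. Qed.

Lemma Tk_eqE (s s' : {set 'I_6}) : (Tk C0 s == Tk C0 s') = (tkm (bits s) == tkm (bits s')).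
Proof.
apply/eqP/eqP => [E|E].
- rewrite /tkm /C0m -!map_comp; apply/eq_in_map => l Hl.
  have Hc := cw_in Hl.
  change (subm (bits s) (cwm l) = subm (bits s') (cwm l)).
  rewrite -bits_cw -!subsetbE.
  have : (cw l \in Tk C0 s) = (cw l \in Tk C0 s') by rewrite E.
  by rewrite !in_Tk Hc.
- apply: sieve_eq => c Hc; rewrite !subsetbE.
  move: Hc; rewrite C0mE => Hc.
  move: E; rewrite /tkm => /eq_in_map; exact.
Qed.

Lemma allbv_size n l : l \in allbv n -> size l = n.
Proof.
elim: n l => [|n IH] l /=; first by rewrite inE => /eqP ->.
rewrite !mem_cat => /orP [|/orP [|//]].
- by case/mapP => l' /IH <- ->.
- by case/mapP => l' /IH <- ->.
Qed.

Definition R3check (hm : seq bool -> seq bool) (im : nat) : bool :=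
  all (fun cm => ~~ subm (nseq 6 true) (hm cm)) C0m &&
  all (fun sm => (tkm sm == tkm (singm im)) ||
     has (fun tm => all (fun cm => subm sm cm == subm tm (hm cm)) C0m) (allbv 6)) (allbv 6).

Lemma bitsT : bits [set: 'I_6] = nseq 6 true.
Proof. by rewrite /bits /= !inE. Qed.

Lemma R3_of (im : nat) (Him : (im < 6)%nat) (h : {set 'I_6} -> {set 'I_6}) hm
  (Hh : forall c, bits (h c) = hm (bits c)) :
  R3check hm im ->
  forall T : code 6, is_trunk C0 T -> T != Tk C0 [set Ordinal Him] ->
    exists tau : {set 'I_6}, T = [set c in C0 | tau \subset h c].
Proof.
case/andP => /allP H0 /allP H1 T [->|[s ->]] HT.
- exists [set: 'I_6]; apply/setP => c; rewrite in_set0 in_sieve.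
  case Hc: (c \in C0) => //=.
  rewrite subsetbE bitsT Hh; apply/esym/negbTE; apply: H0; by rewrite -C0mE.
- have := H1 _ (bits_all s).
  have -> : (tkm (bits s) == tkm (singm im)) = false.
    by rewrite -(bits_single Him) -Tk_eqE; apply/negbTE.
  case/hasP => tm Htm /allP Hall.
  have Hsz : sz6 tm by rewrite /sz6 (allbv_size Htm).
  exists (dec tm); apply/setP => c; rewrite in_Tk in_sieve.
  case Hc: (c \in C0) => //=.
  rewrite !subsetbE Hh bits_dec //; apply/eqP; apply: Hall; by rewrite -C0mE.
Qed.

Lemma TkC0 : Tk C0 set0 = C0.
Proof. by apply/setP => c; rewrite !inE sub0set andbT. Qed.


Definition hdel (k : 'I_6) (c : {set 'I_6}) : {set 'I_6} := c :\ k.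
Definition hmdel (k : nat) (c : seq bool) : seq bool := clr c k.
Lemma hdelE (k : 'I_6) c : bits (hdel k c) = hmdel k (bits c).
Proof. by rewrite /hdel bitsD1. Qed.

Definition hkeep (w : seq nat) (k : 'I_6) (c : {set 'I_6}) : {set 'I_6} :=
  if c == cw w then c else c :\ k.
Definition hmkeep (w : seq nat) (k : nat) (c : seq bool) : seq bool :=
  if c == cwm w then c else clr c k.
Lemma hkeepE w (k : 'I_6) c : bits (hkeep w k c) = hmkeep w k (bits c).
Proof.
rewrite /hkeep /hmkeep eq_bits bits_cw.
by case: (bits c == cwm w) => //; rewrite bitsD1.
Qed.

Lemma R3c0 : R3check (hmkeep [:: 1; 4; 5]%nat 0) 0. Proof. by vm_compute. Qed.
Lemma R3c1 : R3check (hmkeep [:: 2; 5; 6]%nat 1) 1. Proof. by vm_compute. Qed.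
Lemma R3c2 : R3check (hmdel 2) 2. Proof. by vm_compute. Qed.
Lemma R3c3 : R3check (hmdel 3) 3. Proof. by vm_compute. Qed.
Lemma R3c4 : R3check (hmdel 4) 4. Proof. by vm_compute. Qed.
Lemma R3c5 : R3check (hmdel 5) 5. Proof. by vm_compute. Qed.


Open Scope R_scope.

Definition mkp (x y z : R) : Rvec 3 := fun i => if i == cx then x else if i == cy then y else z.

Definition consm (cls : seq (seq nat * seq nat)) (b : seq bool) : bool :=
  all (fun cl => all (nth false b) cl.1 ==> has (nth false b) cl.2) cls.

Lemma R1_of (P : 'I_6 -> seq ineq) h hm (Hh : forall c, bits (h c) = hm (bits c)) cls :
  all (fun b => consm cls b ==> has (fun cm => b == hm cm) C0m) (allbv 6) ->
  (forall p, consm cls (bits (pat3 P p))) ->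
  forall p, exists c, c \in C0 /\ pat3 P p = h c.
Proof.
move=> /allP Hc Hg p.
have := implyP (Hc _ (bits_all (pat3 P p))) (Hg p).
case/hasP => cm; rewrite /C0m => /mapP [l Hl ->] /eqP E.
exists (cw l); split; first exact: cw_in.
by apply: bits_inj; rewrite E Hh bits_cw.
Qed.

Fixpoint AllP (A : Type) (Q : A -> Prop) (l : seq A) : Prop :=
  if l is x :: l' then Q x /\ AllP Q l' else True.

Lemma AllP_in (A : eqType) (Q : A -> Prop) l x : AllP Q l -> x \in l -> Q x.
Proof.
elim: l => [|y l IH] //= [Hy Hl]; rewrite inE => /orP [/eqP ->//|]; exact: IH.
Qed.

Lemma R2_of (P : 'I_6 -> seq ineq) h hm (Hh : forall c, bits (h c) = hm (bits c)) tbl :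
  map hm C0m = tbl ->
  AllP (fun b => exists p, bits (pat3 P p) = b) tbl ->
  forall c, c \in C0 -> exists p, pat3 P p = h c.
Proof.
move=> Et Ha c Hc.
have : hm (bits c) \in tbl by rewrite -Et; apply: map_f; rewrite -C0mE.
move/(AllP_in Ha) => [p Hp].
by exists p; apply: bits_inj; rewrite Hp Hh.
Qed.

Ltac dest := repeat match goal with
   | H : is_true (_ && _) |- _ => case/andP: H => ? ?
   | H : is_true (inpoly _ _) |- _ => move/inpolyP: H => /= H
   | H : _ /\ _ |- _ => destruct H
   | H : is_true true |- _ => clear H
   | H : True |- _ => clear H
   end.

Ltac gsingle := apply/orP; left; apply/inpolyP; rewrite /= /mkp /=; repeat split; lra.
Ltac gfalse := exfalso; lra.

Ltac ptrue := apply/inpolyP; rewrite /= /mkp /=; repeat split; lra.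
Ltac pfalse := apply/negbTE/negP; move/inpolyP; rewrite /= /mkp /= => H; dest; lra.

Ltac hyps := repeat match goal with
  | H : is_true (_ && _) |- _ => case/andP: H => ? ?
  | H : is_true (pb _) |- _ => move/pbP: H => H
  | H : is_true true |- _ => clear H
  end.
Ltac gconj := repeat (apply/andP; split; first (apply/pbP; lra)); try done; apply/pbP; lra.
Ltac clause_tac splt := apply/implyP => H; hyps;
  solve [ exfalso; lra | apply/orP; left; gconj
        | apply/orP; right; apply/orP; left; gconj | splt ].

Lemma list6 (A : Type) (e0 e1 e2 e3 e4 e5 b0 b1 b2 b3 b4 b5 : A) :
  e0 = b0 -> e1 = b1 -> e2 = b2 -> e3 = b3 -> e4 = b4 -> e5 = b5 ->
  [:: e0; e1; e2; e3; e4; e5] = [:: b0; b1; b2; b3; b4; b5].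
Proof. by move=> -> -> -> -> -> ->. Qed.

Ltac pt_one := first [ gconj | (apply/negbTE/negP => H; hyps; lra) ].
Ltac pt_tac := rewrite /bits /pat3 /= !in_set /mkp /=; apply: list6; pt_one.

Close Scope R_scope.


Open Scope R_scope.
Definition E1P (k : 'I_6) : seq ineq := nth [::] [::
 [:: ((-1),0,0,0); (1,0,0,1); (0,(-1),0,0); (0,1,0,1)];
 [:: (0,(-1),0,2); (0,1,0,1); (1,0,0,6); ((-1),1,0,(-4))];
 [:: ((-1),0,0,(-2)); (1,0,0,4); (0,(-1),0,2); (0,1,0,1)];
 [:: ((-1),0,0,0); (1,0,0,4); (0,(-1),0,0); (0,1,0,1)];
 [:: ((-1),0,0,0); (1,0,0,6); (0,(-1),0,0); (0,1,0,1)];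
 [:: ((-1),0,0,(-2)); (1,0,0,6); (0,(-1),0,0); (0,1,0,1)]] k.

Definition E1cls : seq (seq nat * seq nat) :=
 [:: ([:: 3], [:: 4]); ([:: 5], [:: 4]); ([:: 4], [:: 3; 5]); ([:: 0], [:: 3]); ([:: 0; 5], [:: ]); ([:: 1; 3], [:: ]); ([:: 2; 4], [:: 3]); ([:: 2; 4], [:: 5]); ([:: 3; 5], [:: 2]); ([:: 1; 2; 4], [:: ])]%nat.

Lemma E1cons_ok : all (fun b => consm E1cls b ==> has (fun cm => b == (hmkeep [:: 1; 4; 5]%nat 0) cm) C0m) (allbv 6).
Proof. by vm_compute. Qed.

Lemma E1geo p : consm E1cls (bits (pat3 E1P p)).
Proof.
rewrite /consm /bits /pat3 /= !in_set /=.
repeat (apply/andP; split); try done; clause_tac ltac:(case: (Rlt_le_dec (p cx) 4) => ?; [apply/orP; left; gconj | apply/orP; right; apply/orP; left; gconj]).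
Qed.

Lemma E1tbl : map (hmkeep [:: 1; 4; 5]%nat 0) C0m = [:: [:: false; false; true; true; true; true]; [:: false; true; true; false; false; false]; [:: true; false; false; true; true; false]; [:: false; true; false; false; true; true]; [:: false; false; false; true; true; false]; [:: false; false; false; false; true; true]; [:: false; false; false; false; false; false]; [:: false; true; false; false; false; false]; [:: false; false; true; false; false; false]; [:: false; false; false; false; false; false]].
Proof. by vm_compute. Qed.

Lemma E1pts : AllP (fun b => exists p, bits (pat3 E1P p) = b) [:: [:: false; false; true; true; true; true]; [:: false; true; true; false; false; false]; [:: true; false; false; true; true; false]; [:: false; true; false; false; true; true]; [:: false; false; false; true; true; false]; [:: false; false; false; false; true; true]; [:: false; false; false; false; false; false]; [:: false; true; false; false; false; false]; [:: false; false; true; false; false; false]; [:: false; false; false; false; false; false]].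
Proof.
rewrite /=.
repeat split.
- exists (mkp 3 (1/2) 0); pt_tac.
- exists (mkp 3 (-3/2) 0); pt_tac.
- exists (mkp (1/2) (1/2) 0); pt_tac.
- exists (mkp (11/2) (1/2) 0); pt_tac.
- exists (mkp (3/2) (1/2) 0); pt_tac.
- exists (mkp (9/2) (1/2) 0); pt_tac.
- exists (mkp 10 10 0); pt_tac.
- exists (mkp (11/2) (-1/2) 0); pt_tac.
- exists (mkp 3 (-1/2) 0); pt_tac.
- exists (mkp 10 10 0); pt_tac.
Qed.

Lemma design_E1 : design o0.
Proof.
exists E1P, (hkeep [:: 1; 4; 5]%nat o0); split.
- exact: (R1_of (hm := (hmkeep [:: 1; 4; 5]%nat 0)) (hkeepE [:: 1; 4; 5]%nat o0) E1cons_ok E1geo).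
- exact: (R2_of (hm := (hmkeep [:: 1; 4; 5]%nat 0)) (hkeepE [:: 1; 4; 5]%nat o0) E1tbl E1pts).
- exact: (@R3_of 0 isT _ _ (hkeepE [:: 1; 4; 5]%nat o0) R3c0).
Qed.

Definition E2P (k : 'I_6) : seq ineq := nth [::] [::
 [:: (0,(-1),0,2); (0,1,0,1); ((-1),0,0,0); (1,1,0,2)];
 [:: ((-1),0,0,(-5)); (1,0,0,6); (0,(-1),0,0); (0,1,0,1)];
 [:: ((-1),0,0,(-2)); (1,0,0,4); (0,(-1),0,2); (0,1,0,1)];
 [:: ((-1),0,0,0); (1,0,0,4); (0,(-1),0,0); (0,1,0,1)];
 [:: ((-1),0,0,0); (1,0,0,6); (0,(-1),0,0); (0,1,0,1)];
 [:: ((-1),0,0,(-2)); (1,0,0,6); (0,(-1),0,0); (0,1,0,1)]] k.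

Definition E2cls : seq (seq nat * seq nat) :=
 [:: ([:: 3], [:: 4]); ([:: 5], [:: 4]); ([:: 4], [:: 3; 5]); ([:: 1], [:: 5]); ([:: 1; 3], [:: ]); ([:: 0; 5], [:: ]); ([:: 2; 4], [:: 3]); ([:: 2; 4], [:: 5]); ([:: 3; 5], [:: 2]); ([:: 0; 2; 4], [:: ])]%nat.

Lemma E2cons_ok : all (fun b => consm E2cls b ==> has (fun cm => b == (hmkeep [:: 2; 5; 6]%nat 1) cm) C0m) (allbv 6).
Proof. by vm_compute. Qed.

Lemma E2geo p : consm E2cls (bits (pat3 E2P p)).
Proof.
rewrite /consm /bits /pat3 /= !in_set /=.
repeat (apply/andP; split); try done; clause_tac ltac:(case: (Rlt_le_dec (p cx) 4) => ?; [apply/orP; left; gconj | apply/orP; right; apply/orP; left; gconj]).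
Qed.

Lemma E2tbl : map (hmkeep [:: 2; 5; 6]%nat 1) C0m = [:: [:: false; false; true; true; true; true]; [:: true; false; true; false; false; false]; [:: true; false; false; true; true; false]; [:: false; true; false; false; true; true]; [:: false; false; false; true; true; false]; [:: false; false; false; false; true; true]; [:: true; false; false; false; false; false]; [:: false; false; false; false; false; false]; [:: false; false; true; false; false; false]; [:: false; false; false; false; false; false]].
Proof. by vm_compute. Qed.

Lemma E2pts : AllP (fun b => exists p, bits (pat3 E2P p) = b) [:: [:: false; false; true; true; true; true]; [:: true; false; true; false; false; false]; [:: true; false; false; true; true; false]; [:: false; true; false; false; true; true]; [:: false; false; false; true; true; false]; [:: false; false; false; false; true; true]; [:: true; false; false; false; false; false]; [:: false; false; false; false; false; false]; [:: false; false; true; false; false; false]; [:: false; false; false; false; false; false]].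
Proof.
rewrite /=.
repeat split.
- exists (mkp 3 (1/2) 0); pt_tac.
- exists (mkp 3 (-3/2) 0); pt_tac.
- exists (mkp (1/2) (1/2) 0); pt_tac.
- exists (mkp (11/2) (1/2) 0); pt_tac.
- exists (mkp (3/2) (1/2) 0); pt_tac.
- exists (mkp (9/2) (1/2) 0); pt_tac.
- exists (mkp (1/2) (-1/2) 0); pt_tac.
- exists (mkp 10 10 0); pt_tac.
- exists (mkp 3 (-1/2) 0); pt_tac.
- exists (mkp 10 10 0); pt_tac.
Qed.

Lemma design_E2 : design o1.
Proof.
exists E2P, (hkeep [:: 2; 5; 6]%nat o1); split.
- exact: (R1_of (hm := (hmkeep [:: 2; 5; 6]%nat 1)) (hkeepE [:: 2; 5; 6]%nat o1) E2cons_ok E2geo).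
- exact: (R2_of (hm := (hmkeep [:: 2; 5; 6]%nat 1)) (hkeepE [:: 2; 5; 6]%nat o1) E2tbl E2pts).
- exact: (@R3_of 1 isT _ _ (hkeepE [:: 2; 5; 6]%nat o1) R3c1).
Qed.

Definition E3P (k : 'I_6) : seq ineq := nth [::] [::
 [:: (0,(-1),0,2); (0,1,0,1); ((-1),0,0,0); (1,1,0,2)];
 [:: (0,(-1),0,2); (0,1,0,1); (1,0,0,6); ((-1),1,0,(-4))];
 [:: (0,0,0,0)];
 [:: ((-1),0,0,0); (1,0,0,4); (0,(-1),0,0); (0,1,0,1)];
 [:: ((-1),0,0,0); (1,0,0,6); (0,(-1),0,0); (0,1,0,1)];
 [:: ((-1),0,0,(-2)); (1,0,0,6); (0,(-1),0,0); (0,1,0,1)]] k.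

Definition E3cls : seq (seq nat * seq nat) :=
 [:: ([:: 2], [:: ]); ([:: 3], [:: 4]); ([:: 5], [:: 4]); ([:: 4], [:: 3; 5]); ([:: 0; 5], [:: ]); ([:: 1; 3], [:: ]); ([:: 0; 1; 4], [:: ])]%nat.

Lemma E3cons_ok : all (fun b => consm E3cls b ==> has (fun cm => b == (hmdel 2) cm) C0m) (allbv 6).
Proof. by vm_compute. Qed.

Lemma E3geo p : consm E3cls (bits (pat3 E3P p)).
Proof.
rewrite /consm /bits /pat3 /= !in_set /=.
repeat (apply/andP; split); try done; clause_tac ltac:(case: (Rlt_le_dec (p cx) 4) => ?; [apply/orP; left; gconj | apply/orP; right; apply/orP; left; gconj]).
Qed.

Lemma E3tbl : map (hmdel 2) C0m = [:: [:: false; false; false; true; true; true]; [:: true; true; false; false; false; false]; [:: true; false; false; true; true; false]; [:: false; true; false; false; true; true]; [:: false; false; false; true; true; false]; [:: false; false; false; false; true; true]; [:: true; false; false; false; false; false]; [:: false; true; false; false; false; false]; [:: false; false; false; false; false; false]; [:: false; false; false; false; false; false]].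
Proof. by vm_compute. Qed.

Lemma E3pts : AllP (fun b => exists p, bits (pat3 E3P p) = b) [:: [:: false; false; false; true; true; true]; [:: true; true; false; false; false; false]; [:: true; false; false; true; true; false]; [:: false; true; false; false; true; true]; [:: false; false; false; true; true; false]; [:: false; false; false; false; true; true]; [:: true; false; false; false; false; false]; [:: false; true; false; false; false; false]; [:: false; false; false; false; false; false]; [:: false; false; false; false; false; false]].
Proof.
rewrite /=.
repeat split.
- exists (mkp 3 (1/2) 0); pt_tac.
- exists (mkp 3 (-3/2) 0); pt_tac.
- exists (mkp (1/2) (1/2) 0); pt_tac.
- exists (mkp (11/2) (1/2) 0); pt_tac.
- exists (mkp (9/5) (1/2) 0); pt_tac.
- exists (mkp (21/5) (1/2) 0); pt_tac.
- exists (mkp (1/2) (-1/2) 0); pt_tac.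
- exists (mkp (11/2) (-1/2) 0); pt_tac.
- exists (mkp 10 10 0); pt_tac.
- exists (mkp 10 10 0); pt_tac.
Qed.

Lemma design_E3 : design o2.
Proof.
exists E3P, (hdel o2); split.
- exact: (R1_of (hm := (hmdel 2)) (hdelE o2) E3cons_ok E3geo).
- exact: (R2_of (hm := (hmdel 2)) (hdelE o2) E3tbl E3pts).
- exact: (@R3_of 2 isT _ _ (hdelE o2) R3c2).
Qed.

Definition E4P (k : 'I_6) : seq ineq := nth [::] [::
 [:: ((-1),0,0,1); (0,1,0,1); (0,(-1),0,1); (0,0,1,1); (0,0,(-1),1); (1,9,0,10); (1,(-9),0,10); (1,0,9,10); (1,0,(-9),10)];
 [:: (0,(-1),0,1); (1,0,0,1); ((-1),0,0,1); (0,0,1,1); (0,0,(-1),1); (9,1,0,10); ((-9),1,0,10); (0,1,9,10); (0,1,(-9),10)];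
 [:: (0,0,(-1),1); (1,0,0,1); ((-1),0,0,1); (0,1,0,1); (0,(-1),0,1); (9,0,1,10); ((-9),0,1,10); (0,9,1,10); (0,(-9),1,10)];
 [:: (0,0,0,0)];
 [:: ((-1),(-1),(-1),(-9))];
 [:: ((-1),(-1),(-1),(-9)); (1,0,0,1)]] k.

Definition E4cls : seq (seq nat * seq nat) :=
 [:: ([:: 3], [:: ]); ([:: 5], [:: 4]); ([:: 0; 1], [:: 2]); ([:: 0; 2], [:: 1]); ([:: 1; 2], [:: 0]); ([:: 0; 1; 4], [:: ]); ([:: 0; 5], [:: ]); ([:: 1; 4], [:: 5]); ([:: 2; 4], [:: 5])]%nat.

Lemma E4cons_ok : all (fun b => consm E4cls b ==> has (fun cm => b == (hmdel 3) cm) C0m) (allbv 6).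
Proof. by vm_compute. Qed.

Lemma E4geo p : consm E4cls (bits (pat3 E4P p)).
Proof.
rewrite /consm /bits /pat3 /= !in_set /=.
repeat (apply/andP; split); try done; clause_tac ltac:(fail).
Qed.

Lemma E4tbl : map (hmdel 3) C0m = [:: [:: false; false; true; false; true; true]; [:: true; true; true; false; false; false]; [:: true; false; false; false; true; false]; [:: false; true; false; false; true; true]; [:: false; false; false; false; true; false]; [:: false; false; false; false; true; true]; [:: true; false; false; false; false; false]; [:: false; true; false; false; false; false]; [:: false; false; true; false; false; false]; [:: false; false; false; false; false; false]].
Proof. by vm_compute. Qed.

Lemma E4pts : AllP (fun b => exists p, bits (pat3 E4P p) = b) [:: [:: false; false; true; false; true; true]; [:: true; true; true; false; false; false]; [:: true; false; false; false; true; false]; [:: false; true; false; false; true; true]; [:: false; false; false; false; true; false]; [:: false; false; false; false; true; true]; [:: true; false; false; false; false; false]; [:: false; true; false; false; false; false]; [:: false; false; true; false; false; false]; [:: false; false; false; false; false; false]].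
Proof.
rewrite /=.
repeat split.
- exists (mkp 0 0 (19/2)); pt_tac.
- exists (mkp 0 0 0); pt_tac.
- exists (mkp (19/2) 0 0); pt_tac.
- exists (mkp 0 (19/2) 0); pt_tac.
- exists (mkp 5 5 0); pt_tac.
- exists (mkp 0 5 5); pt_tac.
- exists (mkp 5 0 0); pt_tac.
- exists (mkp 0 5 0); pt_tac.
- exists (mkp 0 0 5); pt_tac.
- exists (mkp (-5) (-5) (-5)); pt_tac.
Qed.

Lemma design_E4 : design o3.
Proof.
exists E4P, (hdel o3); split.
- exact: (R1_of (hm := (hmdel 3)) (hdelE o3) E4cons_ok E4geo).
- exact: (R2_of (hm := (hmdel 3)) (hdelE o3) E4tbl E4pts).
- exact: (@R3_of 3 isT _ _ (hdelE o3) R3c3).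
Qed.

Definition E5P (k : 'I_6) : seq ineq := nth [::] [::
 [:: ((-1),0,0,1); (0,1,0,1); (0,(-1),0,1); (0,0,1,1); (0,0,(-1),1); (1,9,0,10); (1,(-9),0,10); (1,0,9,10); (1,0,(-9),10)];
 [:: (0,(-1),0,1); (1,0,0,1); ((-1),0,0,1); (0,0,1,1); (0,0,(-1),1); (9,1,0,10); ((-9),1,0,10); (0,1,9,10); (0,1,(-9),10)];
 [:: (0,0,(-1),1); (1,0,0,1); ((-1),0,0,1); (0,1,0,1); (0,(-1),0,1); (9,0,1,10); ((-9),0,1,10); (0,9,1,10); (0,(-9),1,10)];
 [:: ((-1),(-1),(-1),(-9)); (0,9,1,10); (0,(-9),1,10); ((-9),0,1,10)];
 [:: (0,0,0,0)];
 [:: ((-1),(-1),(-1),(-9)); (9,0,1,10); ((-9),0,1,10); (0,(-9),1,10)]] k.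

Definition E5cls : seq (seq nat * seq nat) :=
 [:: ([:: 4], [:: ]); ([:: 0; 1], [:: 2]); ([:: 0; 2], [:: 1]); ([:: 1; 2], [:: 0]); ([:: 0; 1; 3], [:: ]); ([:: 0; 1; 5], [:: ]); ([:: 3; 5], [:: 2]); ([:: 2; 3], [:: 5]); ([:: 2; 5], [:: 3]); ([:: 0; 5], [:: ]); ([:: 1; 3], [:: ])]%nat.

Lemma E5cons_ok : all (fun b => consm E5cls b ==> has (fun cm => b == (hmdel 4) cm) C0m) (allbv 6).
Proof. by vm_compute. Qed.

Lemma E5geo p : consm E5cls (bits (pat3 E5P p)).
Proof.
rewrite /consm /bits /pat3 /= !in_set /=.
repeat (apply/andP; split); try done; clause_tac ltac:(fail).
Qed.

Lemma E5tbl : map (hmdel 4) C0m = [:: [:: false; false; true; true; false; true]; [:: true; true; true; false; false; false]; [:: true; false; false; true; false; false]; [:: false; true; false; false; false; true]; [:: false; false; false; true; false; false]; [:: false; false; false; false; false; true]; [:: true; false; false; false; false; false]; [:: false; true; false; false; false; false]; [:: false; false; true; false; false; false]; [:: false; false; false; false; false; false]].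
Proof. by vm_compute. Qed.

Lemma E5pts : AllP (fun b => exists p, bits (pat3 E5P p) = b) [:: [:: false; false; true; true; false; true]; [:: true; true; true; false; false; false]; [:: true; false; false; true; false; false]; [:: false; true; false; false; false; true]; [:: false; false; false; true; false; false]; [:: false; false; false; false; false; true]; [:: true; false; false; false; false; false]; [:: false; true; false; false; false; false]; [:: false; false; true; false; false; false]; [:: false; false; false; false; false; false]].
Proof.
rewrite /=.
repeat split.
- exists (mkp 0 0 (19/2)); pt_tac.
- exists (mkp 0 0 0); pt_tac.
- exists (mkp (19/2) 0 0); pt_tac.
- exists (mkp 0 (19/2) 0); pt_tac.
- exists (mkp 5 0 5); pt_tac.
- exists (mkp 0 5 5); pt_tac.
- exists (mkp 5 0 0); pt_tac.
- exists (mkp 0 5 0); pt_tac.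
- exists (mkp 0 0 5); pt_tac.
- exists (mkp (-5) (-5) (-5)); pt_tac.
Qed.

Lemma design_E5 : design o4.
Proof.
exists E5P, (hdel o4); split.
- exact: (R1_of (hm := (hmdel 4)) (hdelE o4) E5cons_ok E5geo).
- exact: (R2_of (hm := (hmdel 4)) (hdelE o4) E5tbl E5pts).
- exact: (@R3_of 4 isT _ _ (hdelE o4) R3c4).
Qed.

Definition E6P (k : 'I_6) : seq ineq := nth [::] [::
 [:: ((-1),0,0,1); (0,1,0,1); (0,(-1),0,1); (0,0,1,1); (0,0,(-1),1); (1,9,0,10); (1,(-9),0,10); (1,0,9,10); (1,0,(-9),10)];
 [:: (0,(-1),0,1); (1,0,0,1); ((-1),0,0,1); (0,0,1,1); (0,0,(-1),1); (9,1,0,10); ((-9),1,0,10); (0,1,9,10); (0,1,(-9),10)];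
 [:: (0,0,(-1),1); (1,0,0,1); ((-1),0,0,1); (0,1,0,1); (0,(-1),0,1); (9,0,1,10); ((-9),0,1,10); (0,9,1,10); (0,(-9),1,10)];
 [:: ((-1),(-1),(-1),(-9)); (0,1,0,1)];
 [:: ((-1),(-1),(-1),(-9))];
 [:: (0,0,0,0)]] k.

Definition E6cls : seq (seq nat * seq nat) :=
 [:: ([:: 5], [:: ]); ([:: 3], [:: 4]); ([:: 0; 1], [:: 2]); ([:: 0; 2], [:: 1]); ([:: 1; 2], [:: 0]); ([:: 0; 1; 4], [:: ]); ([:: 1; 3], [:: ]); ([:: 0; 4], [:: 3]); ([:: 2; 4], [:: 3])]%nat.

Lemma E6cons_ok : all (fun b => consm E6cls b ==> has (fun cm => b == (hmdel 5) cm) C0m) (allbv 6).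
Proof. by vm_compute. Qed.

Lemma E6geo p : consm E6cls (bits (pat3 E6P p)).
Proof.
rewrite /consm /bits /pat3 /= !in_set /=.
repeat (apply/andP; split); try done; clause_tac ltac:(fail).
Qed.

Lemma E6tbl : map (hmdel 5) C0m = [:: [:: false; false; true; true; true; false]; [:: true; true; true; false; false; false]; [:: true; false; false; true; true; false]; [:: false; true; false; false; true; false]; [:: false; false; false; true; true; false]; [:: false; false; false; false; true; false]; [:: true; false; false; false; false; false]; [:: false; true; false; false; false; false]; [:: false; false; true; false; false; false]; [:: false; false; false; false; false; false]].
Proof. by vm_compute. Qed.

Lemma E6pts : AllP (fun b => exists p, bits (pat3 E6P p) = b) [:: [:: false; false; true; true; true; false]; [:: true; true; true; false; false; false]; [:: true; false; false; true; true; false]; [:: false; true; false; false; true; false]; [:: false; false; false; true; true; false]; [:: false; false; false; false; true; false]; [:: true; false; false; false; false; false]; [:: false; true; false; false; false; false]; [:: false; false; true; false; false; false]; [:: false; false; false; false; false; false]].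
Proof.
rewrite /=.
repeat split.
- exists (mkp 0 0 (19/2)); pt_tac.
- exists (mkp 0 0 0); pt_tac.
- exists (mkp (19/2) 0 0); pt_tac.
- exists (mkp 0 (19/2) 0); pt_tac.
- exists (mkp 5 0 5); pt_tac.
- exists (mkp 5 5 0); pt_tac.
- exists (mkp 5 0 0); pt_tac.
- exists (mkp 0 5 0); pt_tac.
- exists (mkp 0 0 5); pt_tac.
- exists (mkp (-5) (-5) (-5)); pt_tac.
Qed.

Lemma design_E6 : design o5.
Proof.
exists E6P, (hdel o5); split.
- exact: (R1_of (hm := (hmdel 5)) (hdelE o5) E6cons_ok E6geo).
- exact: (R2_of (hm := (hmdel 5)) (hdelE o5) E6tbl E6pts).
- exact: (@R3_of 5 isT _ _ (hdelE o5) R3c5).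
Qed.


Close Scope R_scope.


Lemma all_designs (i : 'I_6) : design i.
Proof.
case: (ord6_cases i) => [->|[->|[->|[->|[->|->]]]]].
- exact: design_E1.
- exact: design_E2.
- exact: design_E3.
- exact: design_E4.
- exact: design_E5.
- exact: design_E6.
Qed.

Lemma bits_set1 (k : 'I_6) : bits [set k] = singm k.
Proof. by case: (ord6_cases k) => [->|[->|[->|[->|[->|->]]]]]; rewrite bits1. Qed.

Definition goodm (sm : seq bool) (im : nat) :=
  (tkm sm != tkm (singm im)) && all (fun k => tkm (orm sm (singm k)) != tkm (singm im)) (iota 0 6).

Lemma trunk_good :
  all (fun sm => (tkm sm == tkm (nseq 6 false)) || goodm sm 0 || goodm sm 4) (allbv 6).
Proof. by vm_compute. Qed.

Lemma empty_convex : convex_code (set0 : code 6).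
Proof.
exists 0, (fun _ => False), (fun _ _ => False); split.
- by move=> x [].
- by move=> x y t [].
- by move=> i; split; [move=> x []|split; [move=> x y t []|move=> p []]].
- by move=> s; rewrite in_set0; split => // [[p [[] _]]].
Qed.

Lemma trunk_from_design (im : nat) (Him : (im < 6)%nat) (s0 : {set 'I_6}) :
  goodm (bits s0) im -> convex_code (Tk C0 s0).
Proof.
case/andP => G1 /allP G2.
have D := all_designs (Ordinal Him).
have := design_conv D (m := 6) (T0 := Tk C0 s0) (T := fun k => Tk C0 (s0 :|: [set k])).
have Hi : bits [set Ordinal Him] = singm im by rewrite bits_set1.
case.
- by right; exists s0.
- by rewrite Tk_eqE Hi.
- move=> j; split; first by right; exists (s0 :|: [set j]).
  rewrite Tk_eqE Hi bitsU bits_set1; apply: G2; rewrite mem_iota /=.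
  exact: ltn_ord.
move=> d [X [U HX]].
exists d, X, U.
suff <- : [set [set j | c \in Tk C0 (s0 :|: [set j])] | c in Tk C0 s0] = Tk C0 s0 by [].
rewrite -[RHS]imset_id; apply: eq_in_imset => c; rewrite in_Tk => /andP [Hc Hs].
apply/setP => j; rewrite inE in_Tk Hc /= subUset Hs /= sub1set.
by [].
Qed.

Lemma trunks_convex (T : code 6) : is_trunk C0 T -> T \proper C0 -> convex_code T.
Proof.
case=> [->|[s0 ->]] Hp; first exact: empty_convex.
have := allP trunk_good _ (bits_all s0).
have -> : (tkm (bits s0) == tkm (nseq 6 false)) = false.
  apply/negbTE; rewrite -bits0 -Tk_eqE TkC0.
  by apply/eqP => E; move: Hp; rewrite E properE subxx.
case/orP => G.
- exact: (@trunk_from_design 0 isT).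
- exact: (@trunk_from_design 4 isT).
Qed.

Lemma in_TkN n (C : code n) (s c : {set 'I_n}) : (c \in Tk C s) = (c \in C) && (s \subset c).
Proof. by rewrite /Tk in_set. Qed.

Lemma in_sieveN n (C : code n) (f : {set 'I_n} -> bool) c :
  (c \in [set c in C | f c]) = (c \in C) && f c.
Proof. by rewrite in_set. Qed.

Lemma sieve_eqN n (C : code n) (f g : {set 'I_n} -> bool) :
  (forall c, c \in C -> f c = g c) -> [set c in C | f c] = [set c in C | g c].
Proof.
move=> H; apply/setP => c; rewrite !in_sieveN.
by apply/andP/andP => [[Hc Hf]|[Hc Hg]]; split => //; [rewrite -H|rewrite H].
Qed.

Lemma cw_nil : cw [::] = set0.
Proof. by apply/setP => i; rewrite !inE. Qed.

Lemma C0_not_Tk1 (i : 'I_6) : C0 != Tk C0 [set i].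
Proof.
apply/negP => /eqP E.
have : set0 \in C0 by rewrite -cw_nil; apply: cw_in.
by rewrite E in_Tk sub1set in_set0 andbF.
Qed.

Lemma images_convex m (D : code m) (f : {set 'I_6} -> {set 'I_m}) :
  code_morphism C0 D f -> ~ codes_isomorphic C0 [set f c | c in C0] ->
  convex_code [set f c | c in C0].
Proof.
move=> [HfD HfT] Hni.
pose pbk (j : 'I_m) : code 6 := [set c in C0 | f c \in Tk D [set j]].
have Hpb j : is_trunk C0 (pbk j).
  by apply: HfT; right; exists [set j].
have key : exists i : 'I_6, forall j, pbk j != Tk C0 [set i].
  apply: NNPP => Hn; apply: Hni.
  have H i : exists j, pbk j = Tk C0 [set i].
    apply: NNPP => Hn2; apply: Hn; exists i => j.
    by apply/eqP => E; apply: Hn2; exists j.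
  have [j0 _] := H o0.
  pose jf (i : 'I_6) := odflt j0 [pick j | pbk j == Tk C0 [set i]].
  have Hjf i : pbk (jf i) = Tk C0 [set i].
    rewrite /jf; case: pickP => [j /eqP //|Hn3].
    by have [j Ej] := H i; move: (Hn3 j); rewrite Ej eqxx.
  have memf c (Hc : c \in C0) i : (jf i \in f c) = (i \in c).
    have := congr1 (fun T : code 6 => c \in T) (Hjf i).
    by rewrite /pbk in_sieve !in_Tk Hc /= in_TkN HfD // !sub1set.
  pose g (d : {set 'I_m}) : {set 'I_6} := [set i | jf i \in d].
  have gf c : c \in C0 -> g (f c) = c.
    by move=> Hc; apply/setP => i; rewrite inE memf.
  exists f, g; split.
  - split; first by move=> c Hc; apply: imset_f.
    move=> T [->|[tau ->]].
      left; apply/setP => c; by rewrite in_sieveN !in_set0 andbF.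
    have := HfT (Tk D tau) (or_intror (ex_intro _ tau erefl)).
    suff -> : [set c in C0 | f c \in Tk [set f c0 | c0 in C0] tau] =
              [set c in C0 | f c \in Tk D tau] by [].
    apply: sieve_eq => c Hc; rewrite !in_TkN HfD // imset_f //.
  - split; first by move=> d /imsetP [c Hc ->]; rewrite gf.
    move=> T [->|[sg ->]].
      left; apply/setP => c; by rewrite in_sieveN !in_set0 andbF.
    right; exists [set jf i | i in sg].
    apply: sieve_eqN => d /imsetP [c Hc ->].
    rewrite gf // in_TkN Hc /=.
    apply/subsetP/subsetP => [Hs _ /imsetP [i Hi ->]|Hs i Hi].
    + by rewrite memf // Hs.
    + by rewrite -memf //; apply: Hs; apply: imset_f.
  - by move=> c Hc; apply: gf.
  - by move=> d /imsetP [c Hc ->]; rewrite gf.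
case: key => i Hi.
have := design_conv (all_designs i) (T0 := C0) (T := pbk).
case.
- by right; exists set0; rewrite TkC0.
- exact: C0_not_Tk1.
- by move=> j; split.
move=> d [X [U HX]].
exists d, X, U.
suff <- : [set [set j | c \in pbk j] | c in C0] = [set f c | c in C0] by [].
apply: eq_in_imset => c Hc; apply/setP => j.
by rewrite inE in_sieve Hc in_TkN HfD // sub1set.
Qed.

Theorem theorem5p7_main :
  minimally_non_convex C0 /\
  (forall s : {set 'I_6}, ~ local_obstruction1 C0 s) /\
  (forall s : {set 'I_6}, ~ local_obstruction2 C0 s).
Proof.
split; last split.
- split.
  + exact: C0_non_convex.
  + exact: trunks_convex.
  + move=> m D f; exact: images_convex.
- exact: no_obstruction1.
- exact: no_obstruction2.
Qed.

Theorem theorem5p7 :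
  minimally_non_convex C0 /\
  (forall s : {set 'I_6}, ~ local_obstruction1 C0 s) /\
  (forall s : {set 'I_6}, ~ local_obstruction2 C0 s).
Proof. exact: theorem5p7_main. Qed.
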